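(* In the setting described in the context, assume moreover that there is $\beta$ with $0<\beta<\alpha$ such that for every $\delta>0$ there is a constant $c_\delta$ with $|\frac{\partial}{\partial x}u^\epsilon(x,t)|\leq c_\delta\,\epsilon^{-\beta}$ for all $x\in\mathbb{R}$, $t\in[0,\delta]$, $\epsilon\in(0,1)$. Then the family $(u^\epsilon,v^\epsilon)$ is a weak asymptotic method for the equation $\frac{\partial v}{\partial t}+\frac{\partial}{\partial x}(uv)=0$, i.e. for every $\psi\in\mathcal{C}^\infty(\mathbb{R})$ with compact support and every $t\geq0$, $$\int_{\mathbb{R}}\Big[\frac{\partial v^\epsilon}{\partial t}(x,t)\psi(x)-u^\epsilon(x,t)v^\epsilon(x,t)\psi'(x)\Big]dx\longrightarrow 0\quad(\epsilon\to0).$$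
   Context: Let $\mathcal{C}_b(\mathbb{R})$ denote the Banach space of bounded continuous real functions on $\mathbb{R}$ with the sup norm. For a real function $u$ set $u^+=\max(0,u)$, $u^-=\max(0,-u)$. For $0<\epsilon<1$ let $u^\epsilon:\mathbb{R}\times[0,\infty)\to\mathbb{R}$ be $2\pi$-periodic in $x$, differentiable in $x$, with $t\mapsto u^\epsilon(\cdot,t)$ continuous from $[0,\infty)$ into $\mathcal{C}_b(\mathbb{R})$, and assume there is $M_1>0$ with $|u^\epsilon(x,t)|\leq M_1$ for all $\epsilon,x,t\ge0$. Let $v_0^\epsilon\in\mathcal{C}_b(\mathbb{R})$ be $2\pi$-periodic with $\sup_{\epsilon}\int_{-\pi}^{\pi}|v_0^\epsilon|dx<\infty$. Let $X^\epsilon$ be the unique global $\mathcal{C}^1$ solution $[0,\infty)\to\mathcal{C}_b(\mathbb{R})$ of $$\frac{d}{dt}X^\epsilon(x,t)=\frac{1}{\epsilon}\big[X^\epsilon(x-\epsilon,t)u^{\epsilon+}(x-\epsilon,t)-X^\epsilon(x,t)|u^{\epsilon}(x,t)|+X^\epsilon(x+\epsilon,t)u^{\epsilon-}(x+\epsilon,t)\big],\quad X^\epsilon(x,0)=v_0^\epsilon(x).$$ Let $\phi\in\mathcal{C}^\infty(\mathbb{R})$ have compact support with $\int\phi=1$, let $\alpha\in]0,1]$, $\phi_{\epsilon^\alpha}(x)=\epsilon^{-\alpha}\phi(x/\epsilon^\alpha)$, and define $v^\epsilon(x,t)=(X^\epsilon(\cdot,t)*\phi_{\epsilon^\alpha})(x)$.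 *)

(* Defs.v *)
From Stdlib Require Import Reals.
From Coquelicot Require Export Coquelicot.
Open Scope R_scope.

Definition pospart (a : R) : R := Rmax 0 a.
Definition negpart (a : R) : R := Rmax 0 (- a).

Definition Rint_R (f : R -> R) : R :=
  RInt_gen f (Rbar_locally m_infty) (Rbar_locally p_infty).

Definition in_Cb (f : R -> R) : Prop :=
  (forall x, continuous f x) /\ exists M, forall x, Rabs (f x) <= M.

Definition periodic_2pi (f : R -> R) : Prop := forall x, f (x + 2 * PI) = f x.

Definition smooth (f : R -> R) : Prop := forall (n : nat) (x : R), ex_derive_n f n x.

Definition compact_support (f : R -> R) : Prop :=
  exists A, forall x, A < Rabs x -> f x = 0.

(* t |-> w(.,t) is continuous from [0,oo) into C_b(R) (sup norm) *)
Definition cont_into_Cb (w : R -> R -> R) : Prop :=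
  (forall t, 0 <= t -> in_Cb (fun x => w x t)) /\
  forall t, 0 <= t -> forall eta, 0 < eta -> exists d, 0 < d /\
    forall s, 0 <= s -> Rabs (s - t) < d -> forall x, Rabs (w x s - w x t) <= eta.

(* dw is the derivative of t |-> w(.,t) on [0,oo) in C_b(R) (sup norm),
   one-sided at t = 0 *)
Definition Cb_deriv (w dw : R -> R -> R) : Prop :=
  forall t, 0 <= t -> forall eta, 0 < eta -> exists d, 0 < d /\
    forall s, 0 <= s -> s <> t -> Rabs (s - t) < d ->
      forall x, Rabs ((w x s - w x t) / (s - t) - dw x t) <= eta.

(* X is a global C^1 solution [0,oo) -> C_b(R) of the lattice ODE with initial datum v0,
   with time derivative Xd *)
Definition is_C1_solution (eps : R) (u : R -> R -> R) (v0 : R -> R)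
  (X Xd : R -> R -> R) : Prop :=
  cont_into_Cb X /\ cont_into_Cb Xd /\ Cb_deriv X Xd /\
  (forall x, X x 0 = v0 x) /\
  (forall x t, 0 <= t ->
     Xd x t = / eps * (X (x - eps) t * pospart (u (x - eps) t)
                       - X x t * Rabs (u x t)
                       + X (x + eps) t * negpart (u (x + eps) t))).

(* l is the time derivative of w at t, taken within [0,oo) (one-sided at t = 0) *)
Definition tderiv (w : R -> R) (t l : R) : Prop :=
  filterlim (fun h => (w (t + h) - w t) / h)
    (within (fun h => h <> 0 /\ 0 <= t + h) (locally 0)) (locally l).

(* mollifier phi_{eps^alpha} and v^eps = X^eps(.,t) * phi_{eps^alpha} *)
Definition mollif (phi : R -> R) (alpha eps : R) (y : R) : R :=
  / Rpower eps alpha * phi (y / Rpower eps alpha).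

Definition vconv (phi : R -> R) (alpha eps : R) (X : R -> R -> R) (x t : R) : R :=
  Rint_R (fun y => X (x - y) t * mollif phi alpha eps y).

(* Main.v *)
Require Import Defs.
From Stdlib Require Import Reals Lra.
From Coquelicot Require Import Coquelicot.
Open Scope R_scope.

Lemma is_RInt_gen_zero_left (f : R -> R) (B : R) :
  (forall x, x < B -> f x = 0) ->
  is_RInt_gen f (Rbar_locally m_infty) (at_point B) 0.
Proof.
intros Hf.
apply is_RInt_gen_ext with (f := Derive (fun _ => 0)).
- exists (fun a => a < B) (fun b => b = B).
  + exists B; auto.
  + reflexivity.
  + intros a b Ha Hb x Hx; simpl in *. subst b.
    rewrite Derive_const. rewrite Hf; auto.
    rewrite Rmax_right in Hx; lra.
- assert (H0 : is_RInt_gen (Derive (fun _ : R => 0)) (Rbar_locally m_infty) (at_point B) (0 - 0)).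
  { apply is_RInt_gen_Derive.
    + exists (fun _ => True) (fun _ => True); try easy.
      * exists 0; auto.
      * intros; apply ex_derive_const.
    + exists (fun _ => True) (fun _ => True); try easy.
      * exists 0; auto.
      * intros x y _ _ z _. simpl.
        apply continuous_ext with (f := fun _ => 0).
        { intros; rewrite Derive_const; auto. }
        apply continuous_const.
    + apply filterlim_const.
    + apply filterlim_const. }
  rewrite Rminus_0_r in H0. exact H0.
Qed.

Lemma is_RInt_gen_zero_right (f : R -> R) (B : R) :
  (forall x, B < x -> f x = 0) ->
  is_RInt_gen f (at_point B) (Rbar_locally p_infty) 0.
Proof.
intros Hf.
apply is_RInt_gen_ext with (f := Derive (fun _ => 0)).
- exists (fun b => b = B) (fun a => B < a).
  + reflexivity.
  + exists B; auto.
  + intros b a Hb Ha x Hx; simpl in *. subst b.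
    rewrite Derive_const. rewrite Hf; auto.
    rewrite Rmin_left in Hx; lra.
- assert (H0 : is_RInt_gen (Derive (fun _ : R => 0)) (at_point B) (Rbar_locally p_infty) (0 - 0)).
  { apply is_RInt_gen_Derive.
    + exists (fun _ => True) (fun _ => True); try easy.
      * exists 0; auto.
      * intros; apply ex_derive_const.
    + exists (fun _ => True) (fun _ => True); try easy.
      * exists 0; auto.
      * intros x y _ _ z _. simpl.
        apply continuous_ext with (f := fun _ => 0).
        { intros; rewrite Derive_const; auto. }
        apply continuous_const.
    + apply filterlim_const.
    + apply filterlim_const. }
  rewrite Rminus_0_r in H0. exact H0.
Qed.

Lemma Rint_R_supp (f : R -> R) (B : R) :
  0 <= B -> ex_RInt f (-B) B -> (forall x, B < Rabs x -> f x = 0) ->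
  Rint_R f = RInt f (-B) B.
Proof.
intros HB Hex Hf. unfold Rint_R.
apply is_RInt_gen_unique.
assert (H1 : is_RInt_gen f (Rbar_locally m_infty) (at_point (-B)) 0).
{ apply is_RInt_gen_zero_left. intros x Hx. apply Hf.
  unfold Rabs; destruct Rcase_abs; lra. }
assert (H2 : is_RInt_gen f (at_point (-B)) (at_point B) (RInt f (-B) B)).
{ apply (proj2 (is_RInt_gen_at_point f (-B) B _)). exact (RInt_correct f (-B) B Hex). }
assert (H3 : is_RInt_gen f (at_point B) (Rbar_locally p_infty) 0).
{ apply is_RInt_gen_zero_right. intros x Hx. apply Hf.
  unfold Rabs; destruct Rcase_abs; lra. }
pose proof (is_RInt_gen_Chasles f _ _ _ H1 (is_RInt_gen_Chasles f _ _ _ H2 H3)) as H.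
change (is_RInt_gen f (Rbar_locally m_infty) (Rbar_locally p_infty) (0 + (RInt f (-B) B + 0))) in H.
rewrite Rplus_0_l, Rplus_0_r in H. exact H.
Qed.

From Stdlib Require Import Classical Factorial ZArith FunctionalExtensionality.

Lemma real_ind (P : R -> Prop) (T : R) : 0 <= T ->
 (forall s, 0 <= s <= T -> (forall r, 0 <= r < s -> P r) -> P s) ->
 (forall s, 0 <= s < T -> (forall r, 0 <= r <= s -> P r) ->
    exists d, 0 < d /\ forall r, s < r < s + d -> P r) ->
 forall s, 0 <= s <= T -> P s.
Proof.
intros HT H0 H1.
set (E := fun tau => tau <= T /\ forall r, 0 <= r <= tau -> P r).
assert (P0 : P 0).
{ apply H0; [lra|]. intros; lra. }
assert (HE0 : E 0).
{ split; auto. intros r Hr. replace r with 0 by lra. auto. }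
assert (Hb : bound E). { exists T. intros x [Hx _]. auto. }
destruct (completeness E Hb (ex_intro _ 0 HE0)) as [m [Hm1 Hm2]].
assert (Hm0 : 0 <= m) by (apply Hm1; auto).
assert (HmT : m <= T) by (apply Hm2; intros x [Hx _]; auto).
assert (HA : forall r, 0 <= r < m -> P r).
{ intros r Hr.
  destruct (classic (exists tau, E tau /\ r < tau)) as [[tau [[_ Htau] Hrt]]|Hn].
  - apply Htau; lra.
  - exfalso. assert (m <= r).
    { apply Hm2. intros x Hx. destruct (Rle_dec x r); auto.
      exfalso; apply Hn; exists x; split; auto; lra. }
    lra. }
assert (Pm : P m) by (apply H0; auto).
assert (Em : forall r, 0 <= r <= m -> P r).
{ intros r Hr. destruct (Req_dec r m). subst; auto. apply HA; lra. }
assert (HmT' : m = T).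
{ destruct (Req_dec m T); auto. exfalso.
  destruct (H1 m ltac:(lra) Em) as [d [Hd Hd']].
  set (tau := m + Rmin d (T - m) / 2).
  assert (Hmin1 : Rmin d (T - m) <= d) by apply Rmin_l.
  assert (Hmin2 : Rmin d (T - m) <= T - m) by apply Rmin_r.
  assert (Hmin3 : 0 < Rmin d (T - m)) by (apply Rmin_case; lra).
  assert (E tau).
  { split. unfold tau; lra.
    intros r Hr. destruct (Rle_dec r m). apply Em; lra.
    apply Hd'. unfold tau in Hr; lra. }
  assert (tau <= m) by (apply Hm1; auto). unfold tau in *; lra. }
intros s Hs. apply Em. lra.
Qed.

Lemma unif_bound (w : R -> R -> R) (T : R) : cont_into_Cb w -> 0 <= T ->
  exists B, forall x s, 0 <= s <= T -> Rabs (w x s) <= B.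
Proof.
intros [Hcb Hc] HT.
set (P := fun tau => exists B, forall x s, 0 <= s <= tau -> Rabs (w x s) <= B).
assert (Hloc : forall s, 0 <= s -> exists d B, 0 < d /\
   forall x s', 0 <= s' -> Rabs (s' - s) < d -> Rabs (w x s') <= B).
{ intros s Hs. destruct (Hc s Hs 1 Rlt_0_1) as [d [Hd Hd']].
  destruct (Hcb s Hs) as [_ [M HM]].
  exists d, (M + 1). split; auto. intros x s' Hs' Hss.
  specialize (Hd' s' Hs' Hss x). specialize (HM x).
  replace (w x s') with (w x s + (w x s' - w x s)) by ring.
  eapply Rle_trans; [apply Rabs_triang|]. lra. }
assert (HP : forall s, 0 <= s <= T -> P s).
{ apply real_ind; auto.
  - intros s Hs HA. destruct (Hloc s (proj1 Hs)) as [d [B1 [Hd HB1]]].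
    destruct (Req_dec s 0).
    + exists B1. intros x s' Hs'. apply HB1; [lra|]. subst. rewrite Rabs_right; lra.
    + destruct (HA (Rmax 0 (s - d/2))) as [B0 HB0].
      { split. apply Rmax_l. apply Rmax_case; lra. }
      exists (Rmax B0 B1). intros x s' Hs'.
      destruct (Rle_dec s' (Rmax 0 (s - d/2))).
      * eapply Rle_trans; [apply HB0; lra| apply Rmax_l].
      * eapply Rle_trans; [apply HB1|apply Rmax_r]. lra.
        assert (s - d/2 <= Rmax 0 (s - d/2)) by apply Rmax_r.
        rewrite Rabs_left1; lra.
  - intros s Hs HA. destruct (Hloc s (proj1 Hs)) as [d [B1 [Hd HB1]]].
    destruct (HA s) as [B0 HB0]. lra.
    exists d. split; auto. intros r Hr.
    exists (Rmax B0 B1). intros x s' Hs'.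
    destruct (Rle_dec s' s).
    * eapply Rle_trans; [apply HB0; lra| apply Rmax_l].
    * eapply Rle_trans; [apply HB1|apply Rmax_r]. lra.
      rewrite Rabs_right; lra. }
destruct (HP T) as [B HB]. lra. exists B. intros; apply HB; auto.
Qed.

Lemma dini_le (f : R -> R) (T : R) : 0 <= T ->
  (forall t, 0 <= t <= T -> forall e, 0 < e -> exists d, 0 < d /\
      forall s, 0 <= s <= T -> Rabs (s - t) < d -> Rabs (f s - f t) < e) ->
  (forall t, 0 <= t < T -> forall eta, 0 < eta -> exists d, 0 < d /\
      forall h, 0 < h < d -> f (t + h) <= f t + eta * h) ->
  f T <= f 0.
Proof.
intros HT Hc Hd.
assert (Heta : forall eta, 0 < eta -> f T <= f 0 + eta * T).
{ intros eta Heta.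
  apply (real_ind (fun s => f s <= f 0 + eta * s) T); auto; [| |lra].
  - intros s Hs HA. destruct (Req_dec s 0). subst. lra.
    destruct (Rle_dec (f s) (f 0 + eta * s)) as [|Hn]; auto. exfalso.
    set (e := (f s - f 0 - eta * s) / 2).
    destruct (Hc s Hs e) as [d [Hd0 Hd1]]. unfold e; lra.
    set (r := s - Rmin d s / 2).
    assert (0 < Rmin d s) by (apply Rmin_case; lra).
    assert (Rmin d s <= d) by apply Rmin_l.
    assert (Rmin d s <= s) by apply Rmin_r.
    assert (Pr : f r <= f 0 + eta * r) by (apply HA; unfold r; lra).
    assert (Hr : Rabs (f r - f s) < e).
    { apply Hd1. unfold r; lra. unfold r. rewrite Rabs_left; lra. }
    assert (eta * r <= eta * s) by (apply Rmult_le_compat_l; unfold r; lra).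
    apply Rabs_def2 in Hr. unfold e in *. lra.
  - intros s Hs HA. destruct (Hd s Hs eta Heta) as [d [Hd0 Hd1]].
    exists d; split; auto. intros r Hr.
    specialize (Hd1 (r - s) ltac:(lra)). replace (s + (r - s)) with r in Hd1 by ring.
    specialize (HA s ltac:(lra)). nra. }
destruct (Rle_dec (f T) (f 0)) as [|Hn]; auto. exfalso.
specialize (Heta ((f T - f 0) / (2 * (T + 1)))).
assert (0 < (f T - f 0) / (2 * (T + 1))) by (apply Rdiv_lt_0_compat; lra).
specialize (Heta H).
assert ((f T - f 0) / (2 * (T + 1)) * T < f T - f 0).
{ unfold Rdiv. rewrite Rmult_assoc.
  assert (/ (2 * (T + 1)) * T < 1).
  { apply Rmult_lt_reg_l with (2 * (T + 1)). lra.
    rewrite <- Rmult_assoc, Rinv_r by lra. lra. }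
  nra. }
lra.
Qed.

Lemma cont_pt_eps (f : R -> R) (x : R) :
  (forall e, 0 < e -> exists d, 0 < d /\ forall y, Rabs (y - x) < d -> Rabs (f y - f x) < e) ->
  continuity_pt f x.
Proof.
intros H e He. destruct (H e He) as [d [Hd H']]. exists d. split; auto.
intros y [_ Hy]. apply H'. exact Hy.
Qed.

Lemma cont_Rmax0 (w : R -> R -> R) (x r : R) : cont_into_Cb w -> 0 <= r ->
  continuity_pt (fun s => w x (Rmax 0 s)) r.
Proof.
intros [_ Hc] Hr. apply cont_pt_eps. intros e He.
destruct (Hc r Hr (e/2) ltac:(lra)) as [d [Hd H']].
exists d; split; auto. intros y Hy. rewrite (Rmax_right 0 r) by lra.
assert (Rabs (Rmax 0 y - r) <= Rabs (y - r)).
{ unfold Rmax; destruct Rle_dec; [apply Rle_refl| ].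
  rewrite (Rabs_left1 (0 - r)), (Rabs_left1 (y - r)) by lra; lra. }
eapply Rle_lt_trans. apply H'. apply Rmax_l. lra. lra.
Qed.

Lemma deriv_Cb (w dw : R -> R -> R) (x t : R) : Cb_deriv w dw -> 0 < t ->
  is_derive (fun s => w x s) t (dw x t).
Proof.
intros Hd Ht. apply is_derive_Reals. intros e He.
destruct (Hd t (Rlt_le _ _ Ht) (e/2) ltac:(lra)) as [d [Hd0 H']].
assert (Hm : 0 < Rmin d t) by (apply Rmin_case; lra).
exists (mkposreal _ Hm). intros h Hh Hh'. simpl in Hh'.
assert (Rmin d t <= d) by apply Rmin_l. assert (Rmin d t <= t) by apply Rmin_r.
assert (Rabs h < t) by lra. assert (Rabs h < d) by lra.
specialize (H' (t + h)). replace (t + h - t) with h in H' by ring.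
eapply Rle_lt_trans. apply H'; auto.
apply Rabs_def2 in H1. lra. intro; apply Hh; lra. lra.
Qed.

Lemma deriv_Rmax0 (w dw : R -> R -> R) (x t : R) : Cb_deriv w dw -> 0 < t ->
  is_derive (fun s => w x (Rmax 0 s)) t (dw x t).
Proof.
intros Hd Ht. apply is_derive_ext_loc with (fun s => w x s); [|apply deriv_Cb; auto].
assert (Hp : 0 < t) by auto.
exists (mkposreal t Hp). intros y Hy. simpl.
unfold ball in Hy; simpl in Hy; unfold AbsRing_ball, abs, minus, plus, opp in Hy; simpl in Hy.
apply Rabs_def2 in Hy. rewrite Rmax_right; auto. lra.
Qed.

Lemma mvt_bound (g dg F dF : R -> R) (s : R) : 0 < s ->
  (forall r, 0 < r < s -> is_derive g r (dg r)) ->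
  (forall r, 0 <= r <= s -> continuity_pt g r) ->
  (forall r, 0 < r < s -> is_derive F r (dF r)) ->
  (forall r, 0 <= r <= s -> continuity_pt F r) ->
  (forall r, 0 < r < s -> Rabs (dg r) <= dF r) ->
  g 0 = 0 -> F 0 = 0 -> Rabs (g s) <= F s.
Proof.
intros Hs Hg Hgc HF HFc Hb Hg0 HF0.
assert (Hmin : Rmin 0 s = 0) by (apply Rmin_left; lra).
assert (Hmax : Rmax 0 s = s) by (apply Rmax_right; lra).
set (D1 := fun r => if Rlt_dec 0 r then if Rlt_dec r s then dg r - dF r else 0 else 0).
set (D2 := fun r => if Rlt_dec 0 r then if Rlt_dec r s then dg r + dF r else 0 else 0).
destruct (MVT_gen (fun r => g r - F r) 0 s D1) as [c [Hc Hc']].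
{ intros x Hx. rewrite Hmin, Hmax in Hx. unfold D1.
  destruct (Rlt_dec 0 x); [|lra]. destruct (Rlt_dec x s); [|lra].
  apply (is_derive_minus g F); auto. }
{ intros x Hx. rewrite Hmin, Hmax in Hx. apply continuity_pt_minus; auto. }
destruct (MVT_gen (fun r => g r + F r) 0 s D2) as [c' [Hc2 Hc2']].
{ intros x Hx. rewrite Hmin, Hmax in Hx. unfold D2.
  destruct (Rlt_dec 0 x); [|lra]. destruct (Rlt_dec x s); [|lra].
  apply (is_derive_plus g F); auto. }
{ intros x Hx. rewrite Hmin, Hmax in Hx. apply continuity_pt_plus; auto. }
rewrite Hg0, HF0 in Hc', Hc2'.
assert (D1 c <= 0).
{ unfold D1. destruct (Rlt_dec 0 c); [|lra]. destruct (Rlt_dec c s); [|lra].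
  specialize (Hb c (conj r r0)). apply Rabs_le_between in Hb. lra. }
assert (D2 c' >= 0).
{ unfold D2. destruct (Rlt_dec 0 c'); [|lra]. destruct (Rlt_dec c' s); [|lra].
  specialize (Hb c' (conj r r0)). apply Rabs_le_between in Hb. lra. }
apply Rabs_le. split; nra.
Qed.

Lemma gronwall_zero (Y Yd : R -> R -> R) (K B T : R) : 0 <= K -> 0 <= T ->
  (forall x s, 0 <= s <= T -> Rabs (Y x s) <= B) ->
  (forall x, Y x 0 = 0) ->
  (forall x s, 0 < s <= T -> is_derive (fun r => Y x (Rmax 0 r)) s (Yd x s)) ->
  (forall x r, 0 <= r <= T -> continuity_pt (fun s => Y x (Rmax 0 s)) r) ->
  (forall x s F, 0 <= s <= T -> (forall y, Rabs (Y y s) <= F) -> Rabs (Yd x s) <= K * F) ->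
  forall x s, 0 <= s <= T -> Y x s = 0.
Proof.
intros HK HT HB HY0 Hd Hc HYd.
assert (HB0 : 0 <= B).
{ eapply Rle_trans; [apply Rabs_pos|]. apply (HB 0 0). lra. }
assert (Hind : forall n x s, 0 <= s <= T -> Rabs (Y x s) <= B * (K * s) ^ n / INR (fact n)).
{ induction n as [|n IH].
  - intros x s Hs. simpl. unfold Rdiv. rewrite Rinv_1. rewrite !Rmult_1_r. auto.
  - intros x s Hs. destruct (Req_dec s 0) as [->|Hs0].
    + rewrite HY0, Rabs_R0. rewrite Rmult_0_r. simpl. rewrite Rmult_0_l, Rmult_0_r.
      unfold Rdiv; rewrite Rmult_0_l; lra.
    + set (C := B * K ^ (S n) / INR (fact (S n))).
      assert (Hf : forall r, B * (K * r) ^ S n / INR (fact (S n)) = C * r ^ (S n)).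
      { intros r. unfold C. rewrite Rpow_mult_distr. field. apply INR_fact_neq_0. }
      rewrite Hf.
      replace (Y x s) with ((fun r => Y x (Rmax 0 r)) s) by (simpl; rewrite Rmax_right; lra).
      apply (mvt_bound (fun r => Y x (Rmax 0 r)) (fun r => Yd x r) (fun r => C * r ^ (S n)) (fun r => C * (INR (S n) * r ^ n))).
      * lra.
      * intros r Hr. apply Hd. lra.
      * intros r Hr. apply Hc. lra.
      * intros r Hr. auto_derive; auto. simpl. ring.
      * intros r Hr. apply continuity_pt_mult. apply continuity_pt_const. intros a b; auto.
        apply derivable_continuous_pt. apply derivable_pt_pow.
      * intros r Hr.
        eapply Rle_trans. apply (HYd x r (B * (K * r) ^ n / INR (fact n))). lra.
        intros y; apply IH; lra.
        right. unfold C. rewrite fact_simpl, mult_INR, Rpow_mult_distr. simpl (K ^ S n).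
        field. split. apply INR_fact_neq_0. apply not_0_INR. discriminate.
      * simpl. rewrite Rmax_left by lra. apply HY0.
      * simpl. ring. }
intros x s Hs.
pose proof (cv_speed_pow_fact (K * s)) as Hcv.
destruct (Req_dec (Y x s) 0) as [|Hn]; auto. exfalso.
assert (Hp : 0 < Rabs (Y x s)) by (apply Rabs_pos_lt; auto).
destruct (Hcv (Rabs (Y x s) / (B + 1))) as [N HN].
{ apply Rdiv_lt_0_compat; lra. }
specialize (HN N (Nat.le_refl N)). unfold R_dist in HN. rewrite Rminus_0_r in HN.
specialize (Hind N x s Hs).
assert (0 <= (K * s) ^ N / INR (fact N)).
{ apply Rmult_le_pos. apply pow_le. nra. left. apply Rinv_0_lt_compat. apply INR_fact_lt_0. }
rewrite Rabs_right in HN by lra.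
assert (B * (K * s) ^ N / INR (fact N) = B * ((K * s) ^ N / INR (fact N))) by (unfold Rdiv; ring).
assert (B * ((K * s) ^ N / INR (fact N)) <= B * (Rabs (Y x s) / (B + 1))) by (apply Rmult_le_compat_l; lra).
assert (B * (Rabs (Y x s) / (B + 1)) < Rabs (Y x s)).
{ apply Rmult_lt_reg_r with (B + 1). lra. replace (B * (Rabs (Y x s) / (B + 1)) * (B + 1)) with (B * Rabs (Y x s)) by (field; lra). nra. }
lra.
Qed.

Lemma pospart_ge0 a : 0 <= pospart a.
Proof. unfold pospart. apply Rmax_l. Qed.
Lemma negpart_ge0 a : 0 <= negpart a.
Proof. unfold negpart. apply Rmax_l. Qed.
Lemma pos_neg_abs a : pospart a + negpart a = Rabs a.
Proof. unfold pospart, negpart, Rmax, Rabs. repeat destruct Rle_dec; destruct Rcase_abs; lra. Qed.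
Lemma pos_neg_diff a : pospart a - negpart a = a.
Proof. unfold pospart, negpart, Rmax. repeat destruct Rle_dec; lra. Qed.
Lemma pospart_cont (f : R -> R) x : continuity_pt f x -> continuity_pt (fun y => pospart (f y)) x.
Proof.
intros H. unfold pospart.
apply continuity_pt_ext with (fun y => (0 + f y + Rabs (0 - f y)) / 2).
{ intros y. unfold Rmax, Rabs; destruct Rle_dec; destruct Rcase_abs; lra. }
apply continuity_pt_mult; [|apply continuity_pt_const; intros a b; auto].
apply continuity_pt_plus. apply continuity_pt_plus; auto. apply continuity_pt_const; intros a b; auto.
apply (continuity_pt_comp (fun y => 0 - f y) Rabs).
apply continuity_pt_minus; auto. apply continuity_pt_const; intros a b; auto.
apply Rcontinuity_abs.
Qed.
Lemma negpart_cont (f : R -> R) x : continuity_pt f x -> continuity_pt (fun y => negpart (f y)) x.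
Proof.
intros H. unfold negpart.
apply (pospart_cont (fun y => - f y)). apply continuity_pt_opp; auto.
Qed.

Lemma X_periodic (eps M1 : R) (u : R -> R -> R) (v0 : R -> R) (X Xd : R -> R -> R) :
  0 < eps -> is_C1_solution eps u v0 X Xd ->
  (forall x t, 0 <= t -> Rabs (u x t) <= M1) ->
  (forall t, 0 <= t -> periodic_2pi (fun x => u x t)) -> periodic_2pi v0 ->
  forall t, 0 <= t -> periodic_2pi (fun x => X x t).
Proof.
intros Heps [HXc [HXdc [HXd [HX0 Hode]]]] Hub Huper Hv0 t Ht.
assert (HM1 : 0 <= M1) by (eapply Rle_trans; [apply Rabs_pos|apply (Hub 0 0); lra]).
destruct (unif_bound X t HXc Ht) as [B0 HB0].
set (Y := fun x s => X (x + 2 * PI) s - X x s).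
set (Yd := fun x s => Xd (x + 2 * PI) s - Xd x s).
assert (HY : forall x s, 0 <= s <= t -> Y x s = 0).
{ apply (gronwall_zero Y Yd (3 * M1 / eps) (2 * B0) t).
  - apply Rmult_le_pos. lra. left; apply Rinv_0_lt_compat; auto.
  - auto.
  - intros x s Hs. unfold Y. unfold Rminus. eapply Rle_trans. apply Rabs_triang.
    rewrite Rabs_Ropp. pose proof (HB0 (x + 2 * PI) s Hs). pose proof (HB0 x s Hs). lra.
  - intros x. unfold Y. rewrite !HX0. apply Rminus_diag_eq. apply Hv0.
  - intros x s Hs. unfold Y, Yd.
    apply (is_derive_minus (fun r => X (x + 2 * PI) (Rmax 0 r)) (fun r => X x (Rmax 0 r)));
    apply deriv_Rmax0; auto; lra.
  - intros x r Hr. unfold Y. apply continuity_pt_minus; apply cont_Rmax0; auto; lra.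
  - intros x s F Hs HF. unfold Yd.
    rewrite !Hode by lra.
    replace (x + 2 * PI - eps) with (x - eps + 2 * PI) by ring.
    replace (x + 2 * PI + eps) with (x + eps + 2 * PI) by ring.
    rewrite (Huper s (proj1 Hs) (x - eps)), (Huper s (proj1 Hs) (x + eps)), (Huper s (proj1 Hs) x).
    set (a := pospart (u (x - eps) s)). set (b := negpart (u (x + eps) s)).
    set (c := Rabs (u x s)).
    replace (/ eps * (X (x - eps + 2 * PI) s * a - X (x + 2 * PI) s * c + X (x + eps + 2 * PI) s * b) -
      / eps * (X (x - eps) s * a - X x s * c + X (x + eps) s * b))
      with (/ eps * (Y (x - eps) s * a - Y x s * c + Y (x + eps) s * b)) by (unfold Y; ring).
    assert (Ha : 0 <= a <= M1).
    { split. apply pospart_ge0. unfold a.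
      pose proof (negpart_ge0 (u (x - eps) s)). pose proof (Hub (x - eps) s (proj1 Hs)).
      rewrite <- pos_neg_abs in H0. lra. }
    assert (Hb : 0 <= b <= M1).
    { split. apply negpart_ge0. unfold b.
      pose proof (pospart_ge0 (u (x + eps) s)). pose proof (Hub (x + eps) s (proj1 Hs)).
      rewrite <- pos_neg_abs in H0. lra. }
    assert (Hc : 0 <= c <= M1). { split. apply Rabs_pos. apply Hub; lra. }
    rewrite Rabs_mult, Rabs_right by (left; apply Rinv_0_lt_compat; auto).
    replace (3 * M1 / eps * F) with (/ eps * (3 * M1 * F)) by (field; lra).
    apply Rmult_le_compat_l. left; apply Rinv_0_lt_compat; auto.
    pose proof (HF (x - eps)). pose proof (HF x). pose proof (HF (x + eps)).
    unfold Rminus. eapply Rle_trans. apply Rabs_triang. rewrite Rabs_mult.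
    eapply Rle_trans. apply Rplus_le_compat_r. eapply Rle_trans. apply Rabs_triang.
    rewrite Rabs_Ropp, !Rabs_mult. apply Rle_refl.
    rewrite (Rabs_right a), (Rabs_right b), (Rabs_right c) by lra.
    assert (0 <= F) by (eapply Rle_trans; [apply Rabs_pos|eauto]).
    assert (Rabs (Y (x - eps) s) * a <= F * M1) by (apply Rmult_le_compat; try apply Rabs_pos; lra).
    assert (Rabs (Y x s) * c <= F * M1) by (apply Rmult_le_compat; try apply Rabs_pos; lra).
    assert (Rabs (Y (x + eps) s) * b <= F * M1) by (apply Rmult_le_compat; try apply Rabs_pos; lra).
    replace (x + - eps) with (x - eps) by ring. lra. }
intros x. specialize (HY x t ltac:(lra)). unfold Y in HY. lra.
Qed.

Definition contR (f : R -> R) := forall x, continuous f x.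

Lemma contR_mult f g : contR f -> contR g -> contR (fun y => f y * g y).
Proof. intros Hf Hg x. apply (continuous_mult f g); auto. Qed.
Lemma contR_plus f g : contR f -> contR g -> contR (fun y => f y + g y).
Proof. intros Hf Hg x. apply (continuous_plus f g); auto. Qed.
Lemma contR_minus f g : contR f -> contR g -> contR (fun y => f y - g y).
Proof. intros Hf Hg x. apply (continuous_minus f g); auto. Qed.
Lemma contR_const c : contR (fun _ => c).
Proof. intros x. apply continuous_const. Qed.
Lemma contR_id : contR (fun y => y).
Proof. intros x. apply continuous_id. Qed.
Lemma contR_abs f : contR f -> contR (fun y => Rabs (f y)).
Proof. intros Hf x. apply continuous_Rabs_comp. auto. Qed.
Lemma contR_comp f g : contR f -> contR g -> contR (fun y => g (f y)).
Proof. intros Hf Hg x. apply (continuous_comp f g); auto. Qed.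
Lemma contR_shift f c : contR f -> contR (fun y => f (y + c)).
Proof. intros Hf. apply (contR_comp (fun y => y + c) f); auto. apply contR_plus. apply contR_id. apply contR_const. Qed.
Lemma contR_ptR f : contR f -> forall x, continuity_pt f x.
Proof. intros Hf x. apply continuity_pt_filterlim. apply Hf. Qed.
Lemma ptR_contR f : (forall x, continuity_pt f x) -> contR f.
Proof. intros Hf x. apply continuity_pt_filterlim. apply Hf. Qed.
Lemma contR_pospart f : contR f -> contR (fun y => pospart (f y)).
Proof. intros Hf. apply ptR_contR. intros x. apply pospart_cont. apply contR_ptR; auto. Qed.
Lemma contR_negpart f : contR f -> contR (fun y => negpart (f y)).
Proof. intros Hf. apply ptR_contR. intros x. apply negpart_cont. apply contR_ptR; auto. Qed.

Lemma exR f a b : contR f -> ex_RInt f a b.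
Proof. intros Hf. exact (ex_RInt_continuous (V := R_CompleteNormedModule) f a b (fun z _ => Hf z)). Qed.

Lemma RInt_plusR f g a b : contR f -> contR g ->
  RInt (fun y => f y + g y) a b = RInt f a b + RInt g a b.
Proof. intros Hf Hg. apply (RInt_plus f g); apply exR; auto. Qed.
Lemma RInt_minusR f g a b : contR f -> contR g ->
  RInt (fun y => f y - g y) a b = RInt f a b - RInt g a b.
Proof. intros Hf Hg. apply (RInt_minus f g); apply exR; auto. Qed.
Lemma RInt_scalR f a b c : contR f ->
  RInt (fun y => c * f y) a b = c * RInt f a b.
Proof. intros Hf. apply (RInt_scal f a b c); apply exR; auto. Qed.
Lemma RInt_constR a b c : RInt (fun _ => c) a b = c * (b - a).
Proof. rewrite RInt_const. unfold scal; simpl; unfold mult; simpl. ring. Qed.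
Lemma RInt_ChaslesR f a b c : contR f -> RInt f a b + RInt f b c = RInt f a c.
Proof. intros Hf. apply (RInt_Chasles f); apply exR; auto. Qed.
Lemma RInt_swapR f a b : contR f -> RInt f b a = - RInt f a b.
Proof. intros Hf. rewrite <- (opp_RInt_swap f a b) by (apply exR; auto). reflexivity. Qed.
Lemma RInt_leR f g a b : a <= b -> contR f -> contR g ->
  (forall x, a <= x <= b -> f x <= g x) -> RInt f a b <= RInt g a b.
Proof. intros Hab Hf Hg H. apply RInt_le; auto; try apply exR; auto. intros; apply H; lra. Qed.
Lemma RInt_absR f a b : a <= b -> contR f -> Rabs (RInt f a b) <= RInt (fun y => Rabs (f y)) a b.
Proof. intros Hab Hf. apply abs_RInt_le; auto. apply exR; auto. Qed.
Lemma RInt_shiftR f a b c : contR f -> RInt (fun y => f (y + c)) a b = RInt f (a + c) (b + c).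
Proof.
intros Hf. rewrite <- (Rmult_1_l a) at 2. rewrite <- (Rmult_1_l b) at 2.
rewrite <- RInt_comp_lin. 2: apply exR; auto.
apply RInt_ext. intros x _. unfold scal; simpl; unfold mult; simpl. rewrite Rmult_1_l, Rmult_1_l. auto.
Qed.
Lemma RInt_ge0R f a b : a <= b -> contR f -> (forall x, a <= x <= b -> 0 <= f x) -> 0 <= RInt f a b.
Proof.
intros Hab Hf H. rewrite <- (Rmult_0_l (b - a)), <- RInt_constR.
apply RInt_leR; auto. apply contR_const.
Qed.

Lemma periodic_shift (g : R -> R) (c : R) : contR g -> periodic_2pi g ->
  RInt (fun y => g (y + c)) (-PI) PI = RInt g (-PI) PI.
Proof.
intros Hg Hp. rewrite RInt_shiftR; auto.
rewrite <- (RInt_ChaslesR g (-PI + c) (-PI) (PI + c)); auto.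
rewrite <- (RInt_ChaslesR g (-PI) PI (PI + c)); auto.
assert (E : RInt g PI (PI + c) = RInt g (-PI) (-PI + c)).
{ replace PI with (-PI + 2 * PI) at 1 by ring.
  replace (PI + c) with (-PI + c + 2 * PI) by ring.
  rewrite <- RInt_shiftR; auto. apply RInt_ext. intros; apply Hp. }
rewrite E. rewrite (RInt_swapR g (-PI) (-PI + c)); auto. lra.
Qed.

Lemma RInt_lin5 (f1 f2 f3 f4 f5 : R -> R) (k q a b : R) :
  contR f1 -> contR f2 -> contR f3 -> contR f4 -> contR f5 ->
  RInt (fun y => f1 y - k * f2 y - k * f3 y + k * f4 y + k * f5 y + q) a b =
  RInt f1 a b - k * RInt f2 a b - k * RInt f3 a b + k * RInt f4 a b + k * RInt f5 a b + q * (b - a).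
Proof.
intros H1 H2 H3 H4 H5.
assert (C2 : contR (fun y => k * f2 y)) by (apply contR_mult; auto; apply contR_const).
assert (C3 : contR (fun y => k * f3 y)) by (apply contR_mult; auto; apply contR_const).
assert (C4 : contR (fun y => k * f4 y)) by (apply contR_mult; auto; apply contR_const).
assert (C5 : contR (fun y => k * f5 y)) by (apply contR_mult; auto; apply contR_const).
assert (D1 : contR (fun y => f1 y - k * f2 y)) by (apply contR_minus; auto).
assert (D2 : contR (fun y => f1 y - k * f2 y - k * f3 y)) by (apply (contR_minus (fun y => f1 y - k * f2 y)); auto).
assert (D3 : contR (fun y => f1 y - k * f2 y - k * f3 y + k * f4 y)) by (apply (contR_plus (fun y => f1 y - k * f2 y - k * f3 y)); auto).
assert (D4 : contR (fun y => f1 y - k * f2 y - k * f3 y + k * f4 y + k * f5 y)) by (apply (contR_plus (fun y => f1 y - k * f2 y - k * f3 y + k * f4 y)); auto).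
rewrite (RInt_plusR (fun y => f1 y - k * f2 y - k * f3 y + k * f4 y + k * f5 y) (fun _ => q)) by (auto; apply contR_const).
rewrite (RInt_plusR (fun y => f1 y - k * f2 y - k * f3 y + k * f4 y) (fun y => k * f5 y)) by auto.
rewrite (RInt_plusR (fun y => f1 y - k * f2 y - k * f3 y) (fun y => k * f4 y)) by auto.
rewrite (RInt_minusR (fun y => f1 y - k * f2 y) (fun y => k * f3 y)) by auto.
rewrite (RInt_minusR f1 (fun y => k * f2 y)) by auto.
rewrite !RInt_scalR by auto. rewrite RInt_constR. lra.
Qed.

Lemma mass_bound (eps M1 : R) (u : R -> R -> R) (v0 : R -> R) (X Xd : R -> R -> R) :
  0 < eps -> is_C1_solution eps u v0 X Xd ->
  (forall x t, 0 <= t -> Rabs (u x t) <= M1) ->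
  (forall t, 0 <= t -> periodic_2pi (fun x => u x t)) -> periodic_2pi v0 ->
  (forall t, 0 <= t -> contR (fun x => u x t)) ->
  forall t, 0 <= t ->
  RInt (fun y => Rabs (X y t)) (-PI) PI <= RInt (fun y => Rabs (v0 y)) (-PI) PI.
Proof.
intros Heps Hsol Hub Huper Hv0 Hucont t Ht.
pose proof (X_periodic eps M1 u v0 X Xd Heps Hsol Hub Huper Hv0) as HXp.
destruct Hsol as [HXc [HXdc [HXd [HX0 Hode]]]].
assert (HM1 : 0 <= M1) by (eapply Rle_trans; [apply Rabs_pos|apply (Hub 0 0); lra]).
assert (HXcR : forall s, 0 <= s -> contR (fun y => X y s)).
{ intros s Hs x. destruct HXc as [HXc1 _]. destruct (HXc1 s Hs) as [Hc _]. apply Hc. }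
assert (HPI := PI_RGT_0).
set (m := fun s => RInt (fun y => Rabs (X y s)) (-PI) PI).
replace (RInt (fun y => Rabs (v0 y)) (-PI) PI) with (m 0).
2:{ unfold m. apply RInt_ext. intros; rewrite HX0; auto. }
apply (dini_le m t Ht).
- intros t0 Ht0 e He.
  destruct (proj2 HXc t0 (proj1 Ht0) (e / (2 * PI + 1))) as [d [Hd Hd']].
  { apply Rdiv_lt_0_compat; lra. }
  exists d; split; auto. intros s Hs Hst.
  unfold m. rewrite <- RInt_minusR by (apply contR_abs; apply HXcR; lra).
  eapply Rle_lt_trans. apply RInt_absR. lra.
  apply contR_minus; apply contR_abs; apply HXcR; lra.
  eapply Rle_lt_trans. apply RInt_leR with (g := fun _ => e / (2 * PI + 1)). lra.
  apply contR_abs; apply contR_minus; apply contR_abs; apply HXcR; lra.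
  apply contR_const.
  intros x Hx. eapply Rle_trans. apply Rabs_triang_inv2. apply Hd'; lra.
  rewrite RInt_constR.
  replace (e / (2 * PI + 1) * (PI - - PI)) with (e * (2 * PI / (2 * PI + 1))) by (field; lra).
  assert (2 * PI / (2 * PI + 1) < 1).
  { apply Rmult_lt_reg_r with (2 * PI + 1). lra. unfold Rdiv. rewrite Rmult_assoc, Rinv_l by lra. lra. }
  nra.
- intros tau Htau eta Heta.
  destruct (HXd tau (proj1 Htau) (eta / (2 * PI))) as [d1 [Hd1 Hd1']].
  { apply Rdiv_lt_0_compat; lra. }
  exists (Rmin d1 (eps / (M1 + 1))). split.
  { apply Rmin_case; auto. apply Rdiv_lt_0_compat; lra. }
  intros h Hh.
  assert (Hhd1 : h < d1) by (eapply Rlt_le_trans; [apply Hh|apply Rmin_l]).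
  assert (Hhe : h < eps / (M1 + 1)) by (eapply Rlt_le_trans; [apply Hh|apply Rmin_r]).
  assert (HhM : h * M1 < eps).
  { apply Rmult_lt_compat_r with (r := M1 + 1) in Hhe; [|lra].
    unfold Rdiv in Hhe. rewrite Rmult_assoc, Rinv_l in Hhe by lra. nra. }
  set (k := h / eps). set (q := h * (eta / (2 * PI))).
  assert (Hk : 0 <= k) by (unfold k; apply Rmult_le_pos; [lra| left; apply Rinv_0_lt_compat; lra]).
  set (AX := fun y => Rabs (X y tau)).
  set (A := fun y => pospart (u y tau)).
  set (Bn := fun y => negpart (u y tau)).
  set (Rf := fun y => AX y - k * (AX y * A y) - k * (AX y * Bn y)
              + k * (AX (y + - eps) * A (y + - eps)) + k * (AX (y + eps) * Bn (y + eps)) + q).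
  assert (HAX : contR AX) by (apply contR_abs; apply HXcR; lra).
  assert (HA : contR A) by (apply contR_pospart; apply Hucont; lra).
  assert (HB : contR Bn) by (apply contR_negpart; apply Hucont; lra).
  assert (HAXA : contR (fun y => AX y * A y)) by (apply contR_mult; auto).
  assert (HAXB : contR (fun y => AX y * Bn y)) by (apply contR_mult; auto).
  assert (Hpt : forall y, Rabs (X y (tau + h)) <= Rf y).
  { intros y.
    specialize (Hd1' (tau + h) ltac:(lra) ltac:(lra)).
    replace (tau + h - tau) with h in Hd1' by ring.
    specialize (Hd1' ltac:(rewrite Rabs_right; lra) y).
    assert (E1 : Rabs (X y (tau + h) - X y tau - h * Xd y tau) <= q).
    { unfold q. replace (X y (tau + h) - X y tau - h * Xd y tau)
        with (h * ((X y (tau + h) - X y tau) / h - Xd y tau)) by (field; lra).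
      rewrite Rabs_mult, Rabs_right by lra. apply Rmult_le_compat_l; lra. }
    rewrite Hode in E1 by lra.
    assert (Ha1 : 0 <= pospart (u (y - eps) tau)) by apply pospart_ge0.
    assert (Hb1 : 0 <= negpart (u (y + eps) tau)) by apply negpart_ge0.
    assert (Hc1 : Rabs (u y tau) <= M1) by (apply Hub; lra).
    assert (Hkc : k * Rabs (u y tau) <= 1).
    { unfold k. apply Rmult_le_reg_r with eps; auto. unfold Rdiv.
      replace (h * / eps * Rabs (u y tau) * eps) with (h * Rabs (u y tau)) by (field; lra).
      assert (h * Rabs (u y tau) <= h * M1) by (apply Rmult_le_compat_l; lra). lra. }
    replace (X y tau + h * (/ eps * (X (y - eps) tau * pospart (u (y - eps) tau) - X y tau * Rabs (u y tau) +
      X (y + eps) tau * negpart (u (y + eps) tau))))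
      with (X y tau * (1 - k * Rabs (u y tau)) + k * (X (y - eps) tau * pospart (u (y - eps) tau))
            + k * (X (y + eps) tau * negpart (u (y + eps) tau))) in E1 by (unfold k; field; lra).
    unfold Rf, AX, A, Bn.
    replace (y + - eps) with (y - eps) by ring.
    rewrite <- (pos_neg_abs (u y tau)) in Hkc, E1.
    assert (Rabs (X y tau * (1 - k * (pospart (u y tau) + negpart (u y tau))) + k * (X (y - eps) tau * pospart (u (y - eps) tau))
            + k * (X (y + eps) tau * negpart (u (y + eps) tau))) <=
            Rabs (X y tau) * (1 - k * (pospart (u y tau) + negpart (u y tau))) + k * (Rabs (X (y - eps) tau) * pospart (u (y - eps) tau))
            + k * (Rabs (X (y + eps) tau) * negpart (u (y + eps) tau))).
    { eapply Rle_trans. apply Rabs_triang. eapply Rle_trans. apply Rplus_le_compat_r. apply Rabs_triang.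
      rewrite !Rabs_mult. rewrite (Rabs_right (1 - _)) by lra. rewrite (Rabs_right k) by lra.
      rewrite (Rabs_right (pospart _)) by lra. rewrite (Rabs_right (negpart _)) by lra. lra. }
    pose proof (Rabs_triang_inv (X y (tau + h)) (X y tau * (1 - k * (pospart (u y tau) + negpart (u y tau))) + k * (X (y - eps) tau * pospart (u (y - eps) tau))
            + k * (X (y + eps) tau * negpart (u (y + eps) tau)))).
    replace (X y (tau + h) - (X y tau * (1 - k * (pospart (u y tau) + negpart (u y tau))) + k * (X (y - eps) tau * pospart (u (y - eps) tau)) +
          k * (X (y + eps) tau * negpart (u (y + eps) tau))))
      with (X y (tau + h) - X y tau -
          h * (/ eps * (X (y - eps) tau * pospart (u (y - eps) tau) - X y tau * (pospart (u y tau) + negpart (u y tau)) +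
          X (y + eps) tau * negpart (u (y + eps) tau)))) in H0 by (unfold k; field; lra).
    lra. }
  assert (Hc1 : contR (fun y => AX (y + - eps) * A (y + - eps))) by (apply (contR_shift (fun y => AX y * A y)); auto).
  assert (Hc2 : contR (fun y => AX (y + eps) * Bn (y + eps))) by (apply (contR_shift (fun y => AX y * Bn y)); auto).
  assert (HRf : contR Rf).
  { unfold Rf.
    apply contR_plus; [|apply contR_const].
    apply contR_plus; [|apply contR_mult; [apply contR_const| exact Hc2]].
    apply contR_plus; [|apply contR_mult; [apply contR_const| exact Hc1]].
    apply contR_minus; [|apply contR_mult; [apply contR_const| exact HAXB]].
    apply contR_minus; [exact HAX|apply contR_mult; [apply contR_const| exact HAXA]]. }
  assert (Hle : m (tau + h) <= RInt Rf (-PI) PI).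
  { apply RInt_leR. lra. apply contR_abs; apply HXcR; lra. auto. intros; apply Hpt. }
  assert (Hsh1 : RInt (fun y => AX (y + - eps) * A (y + - eps)) (-PI) PI = RInt (fun y => AX y * A y) (-PI) PI).
  { apply (periodic_shift (fun y => AX y * A y)); auto. intros y. unfold AX, A.
    rewrite (HXp tau (proj1 Htau) y), (Huper tau (proj1 Htau) y). auto. }
  assert (Hsh2 : RInt (fun y => AX (y + eps) * Bn (y + eps)) (-PI) PI = RInt (fun y => AX y * Bn y) (-PI) PI).
  { apply (periodic_shift (fun y => AX y * Bn y)); auto. intros y. unfold AX, Bn.
    rewrite (HXp tau (proj1 Htau) y), (Huper tau (proj1 Htau) y). auto. }
  assert (HI : RInt Rf (-PI) PI = m tau + q * (2 * PI)).
  { unfold Rf.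
    rewrite (RInt_lin5 AX (fun y => AX y * A y) (fun y => AX y * Bn y)
      (fun y => AX (y + - eps) * A (y + - eps)) (fun y => AX (y + eps) * Bn (y + eps))) by auto.
    rewrite Hsh1, Hsh2. unfold m. fold AX. lra. }
  unfold q in HI. replace (eta / (2 * PI)) with (eta * / (2 * PI)) in HI by reflexivity.
  assert (E : h * (eta * / (2 * PI)) * (2 * PI) = eta * h) by (field; lra).
  lra.
Qed.

Lemma periodic_n (g : R -> R) : periodic_2pi g -> forall n y, g (y + 2 * PI * INR n) = g y.
Proof.
intros Hp n. induction n as [|n IH]; intros y.
- simpl. f_equal. ring.
- rewrite S_INR. replace (y + 2 * PI * (INR n + 1)) with (y + 2 * PI * INR n + 2 * PI) by ring.
  rewrite Hp. apply IH.
Qed.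

Lemma periodic_RInt_n (g : R -> R) : contR g -> periodic_2pi g -> forall n,
  RInt g (- PI - 2 * PI * INR n) (PI + 2 * PI * INR n) = (2 * INR n + 1) * RInt g (-PI) PI.
Proof.
intros Hc Hp n. induction n as [|n IH].
- simpl. replace (- PI - 2 * PI * 0) with (-PI) by ring. replace (PI + 2 * PI * 0) with PI by ring. lra.
- rewrite S_INR.
  rewrite <- (RInt_ChaslesR g _ (- PI - 2 * PI * INR n) _) by auto.
  rewrite <- (RInt_ChaslesR g (- PI - 2 * PI * INR n) (PI + 2 * PI * INR n) _) by auto.
  rewrite IH.
  assert (E1 : RInt g (PI + 2 * PI * INR n) (PI + 2 * PI * (INR n + 1)) = RInt g (-PI) PI).
  { replace (PI + 2 * PI * INR n) with (-PI + 2 * PI * INR (S n)) by (rewrite S_INR; ring).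
    replace (PI + 2 * PI * (INR n + 1)) with (PI + 2 * PI * INR (S n)) by (rewrite S_INR; ring).
    rewrite <- RInt_shiftR by auto. apply RInt_ext. intros; apply periodic_n; auto. }
  assert (E2 : RInt g (- PI - 2 * PI * (INR n + 1)) (- PI - 2 * PI * INR n) = RInt g (-PI) PI).
  { replace (- PI - 2 * PI * (INR n + 1)) with (-PI + - (2 * PI * INR (S n))) by (rewrite S_INR; ring).
    replace (- PI - 2 * PI * INR n) with (PI + - (2 * PI * INR (S n))) by (rewrite S_INR; ring).
    rewrite <- RInt_shiftR by auto. apply RInt_ext. intros x _.
    rewrite <- (periodic_n g Hp (S n) (x + - (2 * PI * INR (S n)))). f_equal. ring. }
  rewrite E1, E2. lra.
Qed.

Lemma conv_cont (g mo : R -> R) (a b : R) : a <= b -> contR g -> contR mo ->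
  contR (fun x => RInt (fun y => g (x - y) * mo y) a b).
Proof.
intros Hab Hg Hm x0.
apply continuity_pt_filterlim. apply cont_pt_eps. intros e He.
destruct (continuity_ab_maj (fun y => Rabs (mo y)) a b Hab) as [ym [Hym _]].
{ intros c _. apply contR_ptR. apply contR_abs; auto. }
set (Mm := Rabs (mo ym)).
assert (HMm : 0 <= Mm) by apply Rabs_pos.
set (om := e / ((b - a) * Mm + 1)).
assert (Hom : 0 < om) by (unfold om; apply Rdiv_lt_0_compat; [lra| nra]).
destruct (Heine g (fun z => x0 - b - 1 <= z <= x0 - a + 1) (compact_P3 _ _)
  (fun z _ => contR_ptR g Hg z) (mkposreal om Hom)) as [dl Hdl].
exists (Rmin 1 dl). split. { apply Rmin_case; [lra| apply cond_pos]. }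
intros x Hx.
assert (Hx1 : Rabs (x - x0) < 1) by (eapply Rlt_le_trans; [apply Hx|apply Rmin_l]).
assert (Hx2 : Rabs (x - x0) < dl) by (eapply Rlt_le_trans; [apply Hx|apply Rmin_r]).
assert (Hc : forall x, contR (fun y => g (x - y) * mo y)).
{ intros x'. apply contR_mult; auto. apply (contR_comp (fun y => x' - y) g); auto.
  apply contR_minus; [apply contR_const|apply contR_id]. }
rewrite <- RInt_minusR by auto.
eapply Rle_lt_trans. apply RInt_absR; auto. apply contR_minus; auto.
eapply Rle_lt_trans. apply RInt_leR with (g := fun _ => om * Mm); auto.
apply contR_abs; apply contR_minus; auto. apply contR_const.
intros y Hy. replace (g (x - y) * mo y - g (x0 - y) * mo y) with ((g (x - y) - g (x0 - y)) * mo y) by ring.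
rewrite Rabs_mult. apply Rmult_le_compat; try apply Rabs_pos.
left. apply (Hdl (x - y) (x0 - y)).
apply Rabs_def2 in Hx1. lra. lra. replace (x - y - (x0 - y)) with (x - x0) by ring. auto.
apply Hym; auto.
rewrite RInt_constR. unfold om.
apply Rle_lt_trans with (e * ((b - a) * Mm / ((b - a) * Mm + 1))).
right. field. nra.
assert ((b - a) * Mm / ((b - a) * Mm + 1) < 1).
{ apply Rmult_lt_reg_r with ((b - a) * Mm + 1). nra.
  unfold Rdiv. rewrite Rmult_assoc, Rinv_l by nra. nra. }
nra.
Qed.

Lemma contR_RInt (g : R -> R) (c : R) : contR g -> contR (fun z => RInt g c z).
Proof.
intros Hg z. apply (continuous_RInt_1 g c z (fun z => RInt g c z)).
apply filter_forall. intros w. apply (RInt_correct (V := R_CompleteNormedModule)). apply exR; auto.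
Qed.

Lemma double_int (g : R -> R) (a b h : R) : a <= b -> 0 < h -> contR g ->
  (forall z, 0 <= g z) ->
  RInt (fun x => RInt g (x - h) (x + h)) a b <= 2 * h * RInt g (a - h) (b + h).
Proof.
intros Hab Hh Hg Hpos.
set (F := fun z => RInt g (a - h) z).
assert (HF : contR F) by (apply contR_RInt; auto).
assert (E : forall x, RInt g (x - h) (x + h) = F (x + h) - F (x - h)).
{ intros x. unfold F. rewrite <- (RInt_ChaslesR g (a - h) (x - h) (x + h)) by auto. lra. }
rewrite (RInt_ext _ (fun x => F (x + h) - F (x - h))) by (intros; apply E).
assert (C1 : contR (fun x => F (x + h))) by (apply (contR_shift F); auto).
assert (C2 : contR (fun x => F (x - h))).
{ intros x. apply (continuous_ext (fun x => F (x + - h))). intros; f_equal; ring. apply (contR_shift F); auto. }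
rewrite RInt_minusR by auto.
{ rewrite (RInt_ext (fun x => F (x - h)) (fun x => F (x + - h))) by (intros; f_equal; ring).
    rewrite !RInt_shiftR by auto.
    rewrite <- (RInt_ChaslesR F (a + h) (b - h) (b + h)) by auto.
    rewrite <- (RInt_ChaslesR F (a + - h) (a + h) (b + - h)) by auto.
    rewrite <- (RInt_ChaslesR F (a + h) (b - h) (b + - h)) by auto.
    replace (b + - h) with (b - h) by ring. replace (a + - h) with (a - h) by ring.
    rewrite RInt_point.
    assert (H1 : RInt F (b - h) (b + h) <= RInt (fun _ => F (b + h)) (b - h) (b + h)).
    { apply RInt_leR. lra. auto. apply contR_const. intros z Hz. unfold F.
      rewrite <- (RInt_ChaslesR g (a - h) z (b + h)) by auto.
      assert (0 <= RInt g z (b + h)) by (apply RInt_ge0R; auto; lra). lra. }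
    assert (H2 : 0 <= RInt F (a - h) (a + h)).
    { apply RInt_ge0R. lra. auto. intros z Hz. unfold F. apply RInt_ge0R; auto. lra. }
    rewrite RInt_constR in H1. 
    change (zero : R) with 0. lra. }
Qed.

Lemma within_eps (f : R -> R) (D : R -> Prop) (l : R) :
  (forall e, 0 < e -> exists d, 0 < d /\ forall h, D h -> Rabs h < d -> Rabs (f h - l) < e) ->
  filterlim f (within D (locally 0)) (locally l).
Proof.
intros H. apply filterlim_locally. intros e.
destruct (H e (cond_pos e)) as [d [Hd H']].
exists (mkposreal d Hd). intros y Hy HD. apply H'; auto.
unfold ball in Hy; simpl in Hy; unfold AbsRing_ball, abs, minus, plus, opp in Hy; simpl in Hy.
rewrite Ropp_0, Rplus_0_r in Hy. auto.
Qed.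

Lemma at_right_eps (F : R -> R) :
  (forall e, 0 < e -> exists d, 0 < d /\ forall x, 0 < x < d -> Rabs (F x) < e) ->
  filterlim F (at_right 0) (locally 0).
Proof.
intros H. apply filterlim_locally. intros e.
destruct (H e (cond_pos e)) as [d [Hd H']].
exists (mkposreal d Hd). intros y Hy HD.
unfold ball in Hy; simpl in Hy; unfold AbsRing_ball, abs, minus, plus, opp in Hy; simpl in Hy.
rewrite Ropp_0, Rplus_0_r in Hy.
unfold ball; simpl; unfold AbsRing_ball, abs, minus, plus, opp; simpl.
rewrite Ropp_0, Rplus_0_r. apply H'. apply Rabs_def2 in Hy. lra.
Qed.

Lemma rpower_small (g : R) : 0 < g -> forall e, 0 < e -> exists d, 0 < d /\
  forall x, 0 < x < d -> Rpower x g < e.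
Proof.
intros Hg e He. exists (Rpower e (/ g)). split. apply exp_pos.
intros x Hx. unfold Rpower in *.
assert (ln x < / g * ln e).
{ rewrite <- (ln_exp (/ g * ln e)). apply ln_increasing; lra. }
rewrite <- (exp_ln e) by auto. apply exp_increasing.
apply Rmult_lt_compat_l with (r := g) in H; auto.
rewrite <- Rmult_assoc, Rinv_r, Rmult_1_l in H by lra. lra.
Qed.

Lemma lipschitz_mvt (f : R -> R) (L x y : R) :
  (forall z, ex_derive f z) -> (forall z, Rabs (Derive f z) <= L) ->
  Rabs (f y - f x) <= L * Rabs (y - x).
Proof.
intros Hd HL.
destruct (MVT_gen f x y (Derive f)) as [c [_ Hc]].
{ intros; apply Derive_correct; auto. }
{ intros z _; apply continuity_pt_filterlim. exact (ex_derive_continuous f z (Hd z)). }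
rewrite Hc, Rabs_mult. apply Rmult_le_compat_r. apply Rabs_pos. auto.
Qed.

Lemma taylor1 (f : R -> R) (M x h : R) :
  (forall z, ex_derive f z) -> (forall z, ex_derive (Derive f) z) ->
  (forall z, Rmin x (x + h) <= z <= Rmax x (x + h) -> Rabs (Derive (Derive f) z) <= M) ->
  Rabs (f (x + h) - f x - h * Derive f x) <= M * (h * h).
Proof.
intros Hd Hd2 HM.
destruct (MVT_gen f x (x + h) (Derive f)) as [c [Hc Hc']].
{ intros; apply Derive_correct; auto. }
{ intros z _; apply continuity_pt_filterlim. exact (ex_derive_continuous f z (Hd z)). }
destruct (MVT_gen (Derive f) x c (Derive (Derive f))) as [c2 [Hc2 Hc2']].
{ intros; apply Derive_correct; auto. }
{ intros z _; apply continuity_pt_filterlim. exact (ex_derive_continuous (Derive f) z (Hd2 z)). }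
rewrite Hc'. replace (x + h - x) with h by ring.
replace (Derive f c * h - h * Derive f x) with (h * (Derive f c - Derive f x)) by ring.
rewrite Hc2'. rewrite Rabs_mult, Rabs_mult.
assert (Hr : Rmin x (x + h) <= c2 <= Rmax x (x + h)).
{ revert Hc Hc2. unfold Rmin, Rmax. repeat destruct Rle_dec; intros; lra. }
assert (Hcx : Rabs (c - x) <= Rabs h).
{ revert Hc. unfold Rmin, Rmax, Rabs. repeat destruct Rle_dec; repeat destruct Rcase_abs; intros; lra. }
specialize (HM c2 Hr).
assert (0 <= M) by (eapply Rle_trans; [apply Rabs_pos|eauto]).
assert (Rabs (Derive (Derive f) c2) * Rabs (c - x) <= M * Rabs h).
{ apply Rmult_le_compat; try apply Rabs_pos; auto. }
replace (h * h) with (Rabs h * Rabs h) by (rewrite <- Rabs_mult; apply Rabs_pos_eq; nra).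
assert (0 <= Rabs h) by apply Rabs_pos. nra.
Qed.

Lemma RInt_extR (f g : R -> R) (a b : R) :
  (forall x, Rmin a b < x < Rmax a b -> f x = g x) -> RInt f a b = RInt g a b.
Proof. apply RInt_ext. Qed.

Lemma RInt_zeroR (f : R -> R) a b : (forall x, Rmin a b < x < Rmax a b -> f x = 0) -> RInt f a b = 0.
Proof. intros H. rewrite (RInt_ext f (fun _ => 0)) by auto. rewrite RInt_constR. lra. Qed.

Lemma RInt_lin4 (f1 f2 f3 f4 : R -> R) (k a b : R) :
  contR f1 -> contR f2 -> contR f3 -> contR f4 ->
  RInt (fun y => k * (f1 y - f2 y - f3 y + f4 y)) a b =
  k * (RInt f1 a b - RInt f2 a b - RInt f3 a b + RInt f4 a b).
Proof.
intros H1 H2 H3 H4.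
assert (D1 : contR (fun y => f1 y - f2 y)) by (apply contR_minus; auto).
assert (D2 : contR (fun y => f1 y - f2 y - f3 y)) by (apply (contR_minus (fun y => f1 y - f2 y)); auto).
assert (D3 : contR (fun y => f1 y - f2 y - f3 y + f4 y)) by (apply (contR_plus (fun y => f1 y - f2 y - f3 y)); auto).
rewrite (RInt_scalR (fun y => f1 y - f2 y - f3 y + f4 y)) by auto.
rewrite (RInt_plusR (fun y => f1 y - f2 y - f3 y) f4) by auto.
rewrite (RInt_minusR (fun y => f1 y - f2 y) f3) by auto.
rewrite (RInt_minusR f1 f2) by auto. reflexivity.
Qed.

Lemma RInt_refl_sub (f : R -> R) (x h : R) : contR f ->
  RInt (fun y => f (x - y)) (-h) h = RInt f (x - h) (x + h).
Proof.
intros Hf.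
assert (E := RInt_comp_lin f (-1) x (-h) h (exR f _ _ Hf)).
change (RInt (fun y : R => -1 * f (-1 * y + x)) (-h) h = RInt f (-1 * -h + x) (-1 * h + x)) in E.
rewrite (RInt_ext (fun y : R => -1 * f (-1 * y + x)) (fun y => -1 * f (x - y))) in E
  by (intros; do 2 f_equal; ring).
rewrite RInt_scalR in E. 2: apply (contR_comp (fun y => x - y) f); auto; apply contR_minus; [apply contR_const|apply contR_id].
replace (-1 * - h + x) with (x + h) in E by ring. replace (-1 * h + x) with (x - h) in E by ring.
rewrite (RInt_swapR f (x - h) (x + h)) in E by auto. lra.
Qed.

Lemma main_est (eps M1 r P Phi Psi1 Psi2 A1 L Lu t : R) (u : R -> R -> R) (v0 : R -> R)
  (X Xd : R -> R -> R) (mo psi : R -> R) :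
  0 < eps < 1 -> 0 < r < 1 -> 0 < P -> 1 <= A1 -> 0 <= t -> 0 <= Lu ->
  is_C1_solution eps u v0 X Xd ->
  (forall x s, 0 <= s -> Rabs (u x s) <= M1) ->
  contR (fun x => u x t) ->
  (forall x y, Rabs (u y t - u x t) <= Lu * Rabs (y - x)) ->
  contR mo -> (forall y, r * P < Rabs y -> mo y = 0) -> (forall y, Rabs (mo y) <= Phi / r) ->
  contR psi -> contR (Derive psi) -> (forall x, A1 - 1 < Rabs x -> psi x = 0) ->
  (forall x, -A1 <= x <= A1 -> Rabs (Derive psi x) <= Psi1) ->
  (forall x, -A1 <= x <= A1 -> Rabs (psi (x + eps) - psi x - eps * Derive psi x) <= Psi2 * (eps * eps)) ->
  (forall x, -A1 <= x <= A1 -> Rabs (psi (x + - eps) - psi x - (- eps) * Derive psi x) <= Psi2 * (eps * eps)) ->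
  RInt (fun z => Rabs (X z t)) (-A1 - P) (A1 + P) <= L ->
  Rabs (RInt (fun x => RInt (fun y => Xd (x - y) t * mo y) (-P) P * psi x
          - u x t * RInt (fun y => X (x - y) t * mo y) (-P) P * Derive psi x) (-A1) A1)
   <= 2 * P * Phi * L * (2 * M1 * Psi2 * eps + Psi1 * Lu * r * P).
Proof.
intros Heps Hr HP HA1 Ht HLu Hsol Hub Huc HLip Hmoc Hmos Hmob Hpsic Hpsi'c Hpsis HPsi1 HT1 HT2 HL.
destruct Hsol as [HXc [HXdc [_ [_ Hode]]]].
assert (HXt : contR (fun z => X z t)).
{ intros x. destruct HXc as [HXc1 _]. destruct (HXc1 t Ht) as [Hc _]. apply Hc. }
assert (HXdt : contR (fun z => Xd z t)).
{ intros x. destruct HXdc as [HXc1 _]. destruct (HXc1 t Ht) as [Hc _]. apply Hc. }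
set (Xt := fun z => X z t). set (Xdt := fun z => Xd z t).
set (ga := fun z => Xt z * pospart (u z t)).
set (gb := fun z => Xt z * negpart (u z t)).
assert (Hga : contR ga) by (apply contR_mult; auto; apply contR_pospart; auto).
assert (Hgb : contR gb) by (apply contR_mult; auto; apply contR_negpart; auto).
set (conv := fun (g : R -> R) x => RInt (fun y => g (x - y) * mo y) (-P) P).
assert (Hconv : forall g, contR g -> contR (conv g)).
{ intros g Hg. apply conv_cont; auto; lra. }
assert (Hci : forall g x, contR g -> contR (fun y => g (x - y) * mo y)).
{ intros g x Hg. apply contR_mult; auto. apply (contR_comp (fun y => x - y) g); auto.
  apply contR_minus; [apply contR_const|apply contR_id]. }
set (Ga := conv ga). set (Gb := conv gb). set (V := conv Xt). set (dv := conv Xdt).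
assert (HGa : contR Ga) by (apply Hconv; auto).
assert (HGb : contR Gb) by (apply Hconv; auto).
assert (HV : contR V) by (apply Hconv; auto).
assert (Hdv : contR dv) by (apply Hconv; auto).
assert (S1 : forall x, dv x = / eps * (Ga (x + - eps) - Ga x - Gb x + Gb (x + eps))).
{ intros x. unfold dv, Ga, Gb, conv.
  rewrite <- RInt_lin4 by (apply Hci; auto).
  apply RInt_extR. intros y _. unfold Xdt. rewrite Hode by auto.
  unfold ga, gb, Xt. rewrite <- (pos_neg_abs (u (x - y) t)).
  replace (x + - eps - y) with (x - y - eps) by ring.
  replace (x + eps - y) with (x - y + eps) by ring. ring. }
change (Rabs (RInt (fun x => dv x * psi x - u x t * V x * Derive psi x) (-A1) A1) <=
  2 * P * Phi * L * (2 * M1 * Psi2 * eps + Psi1 * Lu * r * P)).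
assert (Hpsiz : forall x, A1 - 1 < Rabs x -> psi x = 0) by auto.
assert (Hpe : contR (fun x => psi (x + eps))) by (apply contR_shift; auto).
assert (Hme : contR (fun x => psi (x + - eps))) by (apply contR_shift; auto).
assert (SH1 : RInt (fun x => Ga (x + - eps) * psi x) (-A1) A1 = RInt (fun x => Ga x * psi (x + eps)) (-A1) A1).
{ set (f := fun x => Ga x * psi (x + eps)).
  assert (Hf : contR f) by (apply contR_mult; auto).
  rewrite (RInt_extR _ (fun x => f (x + - eps))).
  2:{ intros x _. unfold f. f_equal. f_equal. ring. }
  rewrite RInt_shiftR by auto.
  rewrite <- (RInt_ChaslesR f (-A1 + - eps) (-A1) (A1 + - eps)) by auto.
  rewrite <- (RInt_ChaslesR f (-A1) A1 (A1 + - eps)) by auto.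
  rewrite (RInt_zeroR f (-A1 + - eps) (-A1)).
  rewrite (RInt_zeroR f A1 (A1 + - eps)). lra.
  - intros x Hx. rewrite Rmin_right, Rmax_left in Hx by lra. unfold f. rewrite Hpsiz. ring.
    rewrite Rabs_right; lra.
  - intros x Hx. rewrite Rmin_left, Rmax_right in Hx by lra. unfold f. rewrite Hpsiz. ring.
    rewrite Rabs_left; lra. }
assert (SH2 : RInt (fun x => Gb (x + eps) * psi x) (-A1) A1 = RInt (fun x => Gb x * psi (x + - eps)) (-A1) A1).
{ set (f := fun x => Gb x * psi (x + - eps)).
  assert (Hf : contR f) by (apply contR_mult; auto).
  rewrite (RInt_extR _ (fun x => f (x + eps))).
  2:{ intros x _. unfold f. f_equal. f_equal. ring. }
  rewrite RInt_shiftR by auto.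
  rewrite <- (RInt_ChaslesR f (-A1 + eps) (-A1) (A1 + eps)) by auto.
  rewrite <- (RInt_ChaslesR f (-A1) A1 (A1 + eps)) by auto.
  rewrite (RInt_zeroR f (-A1 + eps) (-A1)).
  rewrite (RInt_zeroR f A1 (A1 + eps)). lra.
  - intros x Hx. rewrite Rmin_left, Rmax_right in Hx by lra. unfold f. rewrite Hpsiz. ring.
    rewrite Rabs_right; lra.
  - intros x Hx. rewrite Rmin_right, Rmax_left in Hx by lra. unfold f. rewrite Hpsiz. ring.
    rewrite Rabs_left; lra. }
set (E := fun x => / eps * (Ga x * psi (x + eps) - Ga x * psi x - Gb x * psi x + Gb x * psi (x + - eps))
                   - u x t * V x * Derive psi x).
assert (HuVp : contR (fun x => u x t * V x * Derive psi x)).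
{ apply contR_mult; auto. apply contR_mult; auto. }
assert (Hc1 : contR (fun x => Ga x * psi (x + eps))) by (apply contR_mult; auto).
assert (Hc2 : contR (fun x => Ga x * psi x)) by (apply contR_mult; auto).
assert (Hc3 : contR (fun x => Gb x * psi x)) by (apply contR_mult; auto).
assert (Hc4 : contR (fun x => Gb x * psi (x + - eps))) by (apply contR_mult; auto).
assert (Hc5 : contR (fun x => Ga (x + - eps) * psi x)) by (apply contR_mult; auto; apply contR_shift; auto).
assert (Hc6 : contR (fun x => Gb (x + eps) * psi x)) by (apply contR_mult; auto; apply contR_shift; auto).
assert (HE : contR E).
{ unfold E. apply contR_minus; auto. apply contR_mult. apply contR_const.
  apply (contR_plus (fun x => Ga x * psi (x + eps) - Ga x * psi x - Gb x * psi x)); auto.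
  apply (contR_minus (fun x => Ga x * psi (x + eps) - Ga x * psi x)); auto.
  apply contR_minus; auto. }
assert (S3 : RInt (fun x => dv x * psi x - u x t * V x * Derive psi x) (-A1) A1 = RInt E (-A1) A1).
{ rewrite (RInt_minusR (fun x => dv x * psi x)) by (auto; apply contR_mult; auto).
  unfold E. rewrite (RInt_minusR (fun x => / eps * (Ga x * psi (x + eps) - Ga x * psi x - Gb x * psi x + Gb x * psi (x + - eps)))); auto.
  2:{ apply contR_mult. apply contR_const.
  apply (contR_plus (fun x => Ga x * psi (x + eps) - Ga x * psi x - Gb x * psi x)); auto.
  apply (contR_minus (fun x => Ga x * psi (x + eps) - Ga x * psi x)); auto.
  apply contR_minus; auto. }
  rewrite (RInt_lin4 (fun x => Ga x * psi (x + eps)) (fun x => Ga x * psi x) (fun x => Gb x * psi x) (fun x => Gb x * psi (x + - eps))) by auto.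
  rewrite (RInt_extR (fun x => dv x * psi x) (fun x => / eps * (Ga (x + - eps) * psi x - Ga x * psi x - Gb x * psi x + Gb (x + eps) * psi x))).
  2:{ intros x _. rewrite S1. ring. }
  rewrite RInt_lin4 by auto. rewrite SH1, SH2. reflexivity. }
rewrite S3.
assert (HM1 : 0 <= M1) by (eapply Rle_trans; [apply Rabs_pos|apply (Hub 0 0); lra]).
assert (HPhi : 0 <= Phi).
{ assert (0 <= Phi / r) by (eapply Rle_trans; [apply Rabs_pos|apply (Hmob 0)]).
  apply Rmult_le_reg_r with (/ r). apply Rinv_0_lt_compat; lra. lra. }
assert (HPsi1p : 0 <= Psi1) by (eapply Rle_trans; [apply Rabs_pos|apply (HPsi1 0)]; lra).
assert (HPsi2 : 0 <= Psi2).
{ assert (0 <= Psi2 * (eps * eps)) by (eapply Rle_trans; [apply Rabs_pos|apply (HT1 0)]; lra).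
  apply Rmult_le_reg_r with (eps * eps). nra. lra. }
set (AXt := fun z => Rabs (Xt z)).
assert (HAXt : contR AXt) by (apply contR_abs; auto).
set (Q := fun x => RInt (fun y => AXt (x - y) * Rabs (mo y)) (-P) P).
set (W := fun x => RInt AXt (x - r * P) (x + r * P)).
assert (HW : contR W).
{ set (F := fun z => RInt AXt (-A1 - P) z).
  assert (HF : contR F) by (apply contR_RInt; auto).
  assert (EW : forall x, W x = F (x + r * P) - F (x + - (r * P))).
  { intros x. unfold W, F. rewrite <- (RInt_ChaslesR AXt (-A1 - P) (x + - (r * P)) (x + r * P)) by auto.
    replace (x + - (r * P)) with (x - r * P) by ring. lra. }
  intros x. apply (continuous_ext (fun x => F (x + r * P) - F (x + - (r * P)))).
  intros; rewrite EW; auto.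
  apply contR_minus; apply contR_shift; auto. }
assert (HQW : forall x, Q x <= Phi / r * W x).
{ intros x. unfold Q.
  assert (Hq : contR (fun y => AXt (x - y) * Rabs (mo y))).
  { apply contR_mult. apply (contR_comp (fun y => x - y) AXt); auto.
    apply contR_minus; [apply contR_const|apply contR_id]. apply contR_abs; auto. }
  assert (HrP : r * P < P) by nra.
  rewrite <- (RInt_ChaslesR _ (-P) (- (r * P)) P) by auto.
  rewrite <- (RInt_ChaslesR _ (- (r * P)) (r * P) P) by auto.
  rewrite (RInt_zeroR _ (-P) (- (r * P))).
  2:{ intros y Hy. rewrite Rmin_left, Rmax_right in Hy by nra. rewrite Hmos. rewrite Rabs_R0; ring.
      rewrite Rabs_left; nra. }
  rewrite (RInt_zeroR _ (r * P) P).
  2:{ intros y Hy. rewrite Rmin_left, Rmax_right in Hy by nra. rewrite Hmos. rewrite Rabs_R0; ring.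
      rewrite Rabs_right; nra. }
  unfold W. rewrite <- RInt_refl_sub by auto.
  rewrite <- RInt_scalR. 2: apply (contR_comp (fun y => x - y) AXt); auto; apply contR_minus; [apply contR_const|apply contR_id].
  assert (RInt (fun y => AXt (x - y) * Rabs (mo y)) (- (r * P)) (r * P) <= RInt (fun y => Phi / r * AXt (x - y)) (- (r * P)) (r * P)).
  { apply RInt_leR. nra. auto. apply contR_mult. apply contR_const.
    apply (contR_comp (fun y => x - y) AXt); auto; apply contR_minus; [apply contR_const|apply contR_id].
    intros y _. rewrite Rmult_comm. apply Rmult_le_compat_r. unfold AXt; apply Rabs_pos. apply Hmob. }
  lra. }
assert (HQc : forall x, contR (fun y => AXt (x - y) * Rabs (mo y))).
{ intros x. apply contR_mult. apply (contR_comp (fun y => x - y) AXt); auto.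
  apply contR_minus; [apply contR_const|apply contR_id]. apply contR_abs; auto. }
assert (HGab : forall g, contR g -> (forall z, Rabs (g z) <= M1 * AXt z) -> forall x, Rabs (conv g x) <= M1 * Q x).
{ intros g Hg Hgbd x. unfold conv, Q.
  eapply Rle_trans. apply RInt_absR. lra. apply Hci; auto.
  rewrite <- RInt_scalR by auto. apply RInt_leR. lra. apply contR_abs; apply Hci; auto.
  apply contR_mult; auto. apply contR_const.
  intros y _. rewrite Rabs_mult. rewrite <- Rmult_assoc. apply Rmult_le_compat_r. apply Rabs_pos. apply Hgbd. }
assert (HGa_b : forall x, Rabs (Ga x) <= M1 * Q x).
{ apply HGab; auto. intros z. unfold ga, AXt. rewrite Rabs_mult, (Rmult_comm M1).
  apply Rmult_le_compat_l. apply Rabs_pos. rewrite Rabs_pos_eq by apply pospart_ge0.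
  pose proof (Hub z t Ht). rewrite <- pos_neg_abs in H. pose proof (negpart_ge0 (u z t)). lra. }
assert (HGb_b : forall x, Rabs (Gb x) <= M1 * Q x).
{ apply HGab; auto. intros z. unfold gb, AXt. rewrite Rabs_mult, (Rmult_comm M1).
  apply Rmult_le_compat_l. apply Rabs_pos. rewrite Rabs_pos_eq by apply negpart_ge0.
  pose proof (Hub z t Ht). rewrite <- pos_neg_abs in H. pose proof (pospart_ge0 (u z t)). lra. }
assert (HH_b : forall x, Rabs (Ga x - Gb x - u x t * V x) <= Lu * r * P * Q x).
{ intros x. unfold Ga, Gb, V, conv.
  rewrite <- RInt_scalR by (apply Hci; auto).
  rewrite <- RInt_minusR by (apply Hci; auto).
  rewrite <- RInt_minusR. 2: apply contR_minus; apply Hci; auto.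
  2: apply contR_mult; [apply contR_const|apply Hci; auto].
  eapply Rle_trans. apply RInt_absR. lra.
  apply contR_minus. apply contR_minus; apply Hci; auto. apply contR_mult; [apply contR_const|apply Hci; auto].
  unfold Q. rewrite <- RInt_scalR by auto. apply RInt_leR. lra.
  apply contR_abs. apply contR_minus. apply contR_minus; apply Hci; auto. apply contR_mult; [apply contR_const|apply Hci; auto].
  apply contR_mult; auto. apply contR_const.
  intros y _. unfold ga, gb, AXt.
  replace (Xt (x - y) * pospart (u (x - y) t) * mo y - Xt (x - y) * negpart (u (x - y) t) * mo y - u x t * (Xt (x - y) * mo y))
    with (Xt (x - y) * mo y * ((pospart (u (x - y) t) - negpart (u (x - y) t)) - u x t)) by ring.
  rewrite pos_neg_diff. rewrite !Rabs_mult.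
  destruct (Rle_dec (Rabs y) (r * P)) as [Hy|Hy].
  - assert (Rabs (u (x - y) t - u x t) <= Lu * r * P).
    { eapply Rle_trans. apply HLip. replace (x - y - x) with (- y) by ring. rewrite Rabs_Ropp.
      rewrite Rmult_assoc. apply Rmult_le_compat_l; auto. }
    assert (0 <= Rabs (Xt (x - y)) * Rabs (mo y)) by (apply Rmult_le_pos; apply Rabs_pos).
    rewrite (Rmult_comm (Lu * r * P)). apply Rmult_le_compat_l; auto.
  - rewrite Hmos by lra. rewrite Rabs_R0. rewrite Rmult_0_r, Rmult_0_l, Rmult_0_r. lra. }
set (kap := 2 * M1 * Psi2 * eps + Psi1 * Lu * r * P).
assert (HEb : forall x, -A1 <= x <= A1 -> Rabs (E x) <= kap * Q x).
{ intros x Hx.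
  assert (Eq : E x = Ga x * ((psi (x + eps) - psi x - eps * Derive psi x) / eps)
             + Gb x * ((psi (x + - eps) - psi x - (- eps) * Derive psi x) / eps)
             + (Ga x - Gb x - u x t * V x) * Derive psi x).
  { unfold E. field. lra. }
  rewrite Eq.
  assert (Hq0 : 0 <= Q x).
  { unfold Q. apply RInt_ge0R. lra. auto. intros; apply Rmult_le_pos; [unfold AXt|]; apply Rabs_pos. }
  assert (B1 : Rabs ((psi (x + eps) - psi x - eps * Derive psi x) / eps) <= Psi2 * eps).
  { unfold Rdiv. rewrite Rabs_mult, Rabs_inv, (Rabs_right eps) by lra.
    apply Rmult_le_reg_r with eps. lra. rewrite Rmult_assoc, Rinv_l by lra.
    specialize (HT1 x Hx). nra. }
  assert (B2 : Rabs ((psi (x + - eps) - psi x - (- eps) * Derive psi x) / eps) <= Psi2 * eps).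
  { unfold Rdiv. rewrite Rabs_mult, Rabs_inv, (Rabs_right eps) by lra.
    apply Rmult_le_reg_r with eps. lra. rewrite Rmult_assoc, Rinv_l by lra.
    specialize (HT2 x Hx). nra. }
  specialize (HPsi1 x Hx). specialize (HGa_b x). specialize (HGb_b x). specialize (HH_b x).
  eapply Rle_trans. apply Rabs_triang. eapply Rle_trans. apply Rplus_le_compat_r. apply Rabs_triang.
  rewrite !Rabs_mult.
  assert (Rabs (Ga x) * Rabs ((psi (x + eps) - psi x - eps * Derive psi x) / eps) <= M1 * Q x * (Psi2 * eps))
    by (apply Rmult_le_compat; try apply Rabs_pos; auto).
  assert (Rabs (Gb x) * Rabs ((psi (x + - eps) - psi x - (- eps) * Derive psi x) / eps) <= M1 * Q x * (Psi2 * eps))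
    by (apply Rmult_le_compat; try apply Rabs_pos; auto).
  assert (Rabs (Ga x - Gb x - u x t * V x) * Rabs (Derive psi x) <= Lu * r * P * Q x * Psi1)
    by (apply Rmult_le_compat; try apply Rabs_pos; auto).
  unfold kap. nra. }
assert (Hkap : 0 <= kap).
{ unfold kap. assert (0 <= 2 * M1 * Psi2 * eps) by (repeat apply Rmult_le_pos; lra).
  assert (0 <= Psi1 * Lu * r * P) by (repeat apply Rmult_le_pos; lra). lra. }
assert (HAXp : forall z, 0 <= AXt z) by (intros; apply Rabs_pos).
assert (D1 : RInt W (-A1) A1 <= 2 * (r * P) * RInt AXt (-A1 - r * P) (A1 + r * P)).
{ apply double_int; auto. lra. nra. }
assert (D2 : RInt AXt (-A1 - r * P) (A1 + r * P) <= L).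
{ eapply Rle_trans; [|apply HL]. change (RInt AXt (-A1 - r * P) (A1 + r * P) <= RInt AXt (-A1 - P) (A1 + P)).
  rewrite <- (RInt_ChaslesR AXt (-A1 - P) (-A1 - r * P) (A1 + P)) by auto.
  rewrite <- (RInt_ChaslesR AXt (-A1 - r * P) (A1 + r * P) (A1 + P)) by auto.
  assert (0 <= RInt AXt (-A1 - P) (-A1 - r * P)) by (apply RInt_ge0R; auto; nra).
  assert (0 <= RInt AXt (A1 + r * P) (A1 + P)) by (apply RInt_ge0R; auto; nra).
  lra. }
assert (HW0 : 0 <= RInt W (-A1) A1).
{ apply RInt_ge0R. lra. auto. intros x _. unfold W. apply RInt_ge0R; auto. nra. }
eapply Rle_trans. apply RInt_absR. lra. auto.
eapply Rle_trans. apply RInt_leR with (g := fun x => kap * (Phi / r) * W x). lra.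
apply contR_abs; auto. apply contR_mult; auto. apply contR_const.
intros x Hx. eapply Rle_trans. apply HEb; auto. rewrite Rmult_assoc. apply Rmult_le_compat_l; auto.
rewrite RInt_scalR by auto.
assert (kap * (Phi / r) * RInt W (-A1) A1 <= kap * (Phi / r) * (2 * (r * P) * L)).
{ apply Rmult_le_compat_l. apply Rmult_le_pos; auto. apply Rdiv_le_0_compat; lra.
  eapply Rle_trans. apply D1. apply Rmult_le_compat_l. nra. auto. }
replace (2 * P * Phi * L * kap) with (kap * (Phi / r) * (2 * (r * P) * L)) by (field; lra).
unfold kap in *. lra.
Qed.
Lemma nat_above (x : R) : exists n : nat, x < INR n.
Proof.
destruct (archimed x) as [H _]. exists (Z.abs_nat (up x)).
rewrite INR_IZR_INZ, Zabs2Nat.id_abs, abs_IZR.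
eapply Rlt_le_trans. apply H. apply RRle_abs.
Qed.

Lemma contR_ext (f g : R -> R) : (forall x, f x = g x) -> contR f -> contR g.
Proof. intros H Hf x. apply (continuous_ext f). exact H. apply Hf. Qed.

Theorem lemma2
  (alpha beta M1 : R) (u : R -> R -> R -> R) (v0 : R -> R -> R)
  (X Xd : R -> R -> R -> R) (phi : R -> R)
  (Halpha : 0 < alpha <= 1)
  (HM1 : 0 < M1)
  (Hu_per : forall eps t, 0 < eps < 1 -> 0 <= t -> periodic_2pi (fun x => u eps x t))
  (Hu_dx : forall eps x t, 0 < eps < 1 -> 0 <= t -> ex_derive (fun y => u eps y t) x)
  (Hu_cont : forall eps, 0 < eps < 1 -> cont_into_Cb (u eps))
  (Hu_bd : forall eps x t, 0 < eps < 1 -> 0 <= t -> Rabs (u eps x t) <= M1)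
  (Hv0 : forall eps, 0 < eps < 1 -> in_Cb (v0 eps) /\ periodic_2pi (v0 eps))
  (Hv0_L1 : exists C, forall eps, 0 < eps < 1 ->
              RInt (fun x => Rabs (v0 eps x)) (- PI) PI <= C)
  (HX : forall eps, 0 < eps < 1 -> is_C1_solution eps (u eps) (v0 eps) (X eps) (Xd eps))
  (Hphi : smooth phi /\ compact_support phi /\ Rint_R phi = 1)
  (Hbeta : 0 < beta < alpha)
  (Hux : forall delta, 0 < delta -> exists c, forall eps x t,
           0 < eps < 1 -> 0 <= t <= delta ->
           Rabs (Derive (fun y => u eps y t) x) <= c * Rpower eps (- beta)) :
  exists dv : R -> R -> R -> R,
    (forall eps x t, 0 < eps < 1 -> 0 <= t ->
       tderiv (fun s => vconv phi alpha eps (X eps) x s) t (dv eps x t)) /\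
    (forall psi : R -> R, smooth psi -> compact_support psi -> forall t, 0 <= t ->
       filterlim
         (fun eps => Rint_R (fun x =>
            dv eps x t * psi x
            - u eps x t * vconv phi alpha eps (X eps) x t * Derive psi x))
         (at_right 0) (locally 0)).
Proof.
destruct Hphi as [Hphis [[P0 HP0] _]].
set (P := Rmax P0 0 + 1).
assert (HP : 0 < P) by (unfold P; pose proof (Rmax_r P0 0); lra).
assert (HP0P : P0 < P) by (unfold P; pose proof (Rmax_l P0 0); lra).
assert (Hphic : contR phi).
{ intros x. exact (ex_derive_continuous phi x (Hphis 1%nat x)). }
destruct (continuity_ab_maj (fun z => Rabs (phi z)) (-P) P) as [zm [Hzm _]]. lra.
{ intros c _. apply contR_ptR. apply contR_abs; auto. }
set (Phi := Rabs (phi zm)).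
assert (HPhi : forall z, Rabs (phi z) <= Phi).
{ intros z. destruct (Rle_dec (Rabs z) P).
  - apply Hzm. apply Rabs_le_between in r. lra.
  - rewrite HP0 by lra. rewrite Rabs_R0. apply Rabs_pos. }
assert (Hr : forall eps, 0 < eps < 1 -> 0 < Rpower eps alpha < 1).
{ intros eps Heps. split. apply exp_pos. unfold Rpower. rewrite <- exp_0. apply exp_increasing.
  assert (ln eps < 0) by (rewrite <- ln_1; apply ln_increasing; lra). nra. }
assert (Hmoc : forall eps, 0 < eps < 1 -> contR (mollif phi alpha eps)).
{ intros eps Heps. unfold mollif. apply (contR_mult (fun _ => / Rpower eps alpha)). apply contR_const.
  apply (contR_comp (fun y => y / Rpower eps alpha) phi); auto.
  apply (contR_mult (fun y => y)). apply contR_id. apply contR_const. }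
assert (Hmos : forall eps, 0 < eps < 1 -> forall y, Rpower eps alpha * P < Rabs y -> mollif phi alpha eps y = 0).
{ intros eps Heps y Hy. specialize (Hr eps Heps). unfold mollif. rewrite HP0. ring.
  unfold Rdiv. rewrite Rabs_mult, Rabs_inv, (Rabs_right (Rpower eps alpha)) by lra.
  apply Rmult_lt_reg_r with (Rpower eps alpha). lra. rewrite Rmult_assoc, Rinv_l by lra. nra. }
assert (Hmob : forall eps, 0 < eps < 1 -> forall y, Rabs (mollif phi alpha eps y) <= Phi / Rpower eps alpha).
{ intros eps Heps y. specialize (Hr eps Heps). unfold mollif. rewrite Rabs_mult, Rabs_inv, (Rabs_right (Rpower eps alpha)) by lra.
  unfold Rdiv. rewrite Rmult_comm. apply Rmult_le_compat_r. left; apply Rinv_0_lt_compat; lra. auto. }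
assert (HXcR : forall eps s, 0 < eps < 1 -> 0 <= s -> contR (fun z => X eps z s)).
{ intros eps s Heps Hs x. destruct (HX eps Heps) as [[HXc1 _] _]. destruct (HXc1 s Hs) as [Hc _]. apply Hc. }
assert (HXdcR : forall eps s, 0 < eps < 1 -> 0 <= s -> contR (fun z => Xd eps z s)).
{ intros eps s Heps Hs x. destruct (HX eps Heps) as [_ [[HXc1 _] _]]. destruct (HXc1 s Hs) as [Hc _]. apply Hc. }
assert (Hci : forall g mo x, contR g -> contR mo -> contR (fun y => g (x - y) * mo y)).
{ intros g mo x Hg Hmo. apply contR_mult; auto. apply (contR_comp (fun y => x - y) g); auto.
  apply contR_minus; [apply contR_const|apply contR_id]. }
assert (Hvc : forall eps x s, 0 < eps < 1 -> 0 <= s ->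
   vconv phi alpha eps (X eps) x s = RInt (fun y => X eps (x - y) s * mollif phi alpha eps y) (-P) P).
{ intros eps x s Heps Hs. unfold vconv. apply Rint_R_supp. lra.
  apply exR. apply (Hci (fun z => X eps z s)); auto.
  intros y Hy. specialize (Hr eps Heps). rewrite Hmos; auto. ring. nra. }
exists (fun eps x t => RInt (fun y => Xd eps (x - y) t * mollif phi alpha eps y) (-P) P).
split.
- intros eps x t Heps Ht. unfold tderiv. apply within_eps. intros e He.
  specialize (Hr eps Heps). set (r := Rpower eps alpha) in *.
  set (mo := mollif phi alpha eps).
  assert (HPhi0 : 0 <= Phi) by (eapply Rle_trans; [apply Rabs_pos|apply (HPhi 0)]).
  set (eta := e / (2 * P * (Phi / r) + 1)).
  assert (Hk : 0 <= 2 * P * (Phi / r)) by (apply Rmult_le_pos; [lra| apply Rdiv_le_0_compat; lra]).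
  assert (Heta : 0 < eta) by (unfold eta; apply Rdiv_lt_0_compat; lra).
  destruct (HX eps Heps) as [_ [_ [HXd _]]].
  destruct (HXd t Ht eta Heta) as [d [Hd Hd']].
  exists d; split; auto. intros h [Hh0 Hth] Hhd.
  rewrite !Hvc by auto.
  fold mo.
  assert (C1 : contR (fun y => X eps (x - y) (t + h) * mo y)) by (apply (Hci (fun z => X eps z (t + h))); auto; apply Hmoc; auto).
  assert (C2 : contR (fun y => X eps (x - y) t * mo y)) by (apply (Hci (fun z => X eps z t)); auto; apply Hmoc; auto).
  assert (C3 : contR (fun y => Xd eps (x - y) t * mo y)) by (apply (Hci (fun z => Xd eps z t)); auto; apply Hmoc; auto).
  assert (C4 : contR (fun y => / h * (X eps (x - y) (t + h) * mo y - X eps (x - y) t * mo y))).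
  { apply (contR_mult (fun _ => / h)). apply contR_const. apply contR_minus; auto. }
  replace ((RInt (fun y => X eps (x - y) (t + h) * mo y) (- P) P - RInt (fun y => X eps (x - y) t * mo y) (- P) P) / h)
    with (/ h * (RInt (fun y => X eps (x - y) (t + h) * mo y) (- P) P - RInt (fun y => X eps (x - y) t * mo y) (- P) P))
    by (field; auto).
  rewrite <- RInt_minusR by auto. rewrite <- RInt_scalR by (apply contR_minus; auto).
  rewrite <- RInt_minusR by auto.
  rewrite (RInt_extR _ (fun y => ((X eps (x - y) (t + h) - X eps (x - y) t) / h - Xd eps (x - y) t) * mo y)).
  2:{ intros y _. field. auto. }
  assert (C5 : contR (fun y => ((X eps (x - y) (t + h) - X eps (x - y) t) / h - Xd eps (x - y) t) * mo y)).
  { apply (contR_ext (fun y => / h * (X eps (x - y) (t + h) * mo y - X eps (x - y) t * mo y) - Xd eps (x - y) t * mo y)).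
    intros; field; auto. apply contR_minus; auto. }
  eapply Rle_lt_trans. apply RInt_absR. lra. auto.
  eapply Rle_lt_trans. apply RInt_leR with (g := fun _ => eta * (Phi / r)). lra.
  apply contR_abs; auto. apply contR_const.
  { intros y _. rewrite Rabs_mult. apply Rmult_le_compat; try apply Rabs_pos.
    specialize (Hd' (t + h) Hth). replace (t + h - t) with h in Hd' by ring.
    apply Hd'; auto. intro; apply Hh0; lra. apply Hmob; auto. }
  rewrite RInt_constR.
  replace (eta * (Phi / r) * (P - - P)) with (e * (2 * P * (Phi / r)) * / (2 * P * (Phi / r) + 1)) by (unfold eta, Rdiv; ring).
  set (k := 2 * P * (Phi / r)) in *.
  apply Rmult_lt_reg_r with (k + 1). lra. rewrite Rmult_assoc, Rinv_l by lra. nra.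
- intros psi Hpsis [A HA] t Ht.
  set (A1 := Rmax A 0 + 2).
  assert (HA1 : 1 <= A1) by (unfold A1; pose proof (Rmax_r A 0); lra).
  assert (HAA1 : A < A1 - 1) by (unfold A1; pose proof (Rmax_l A 0); lra).
  assert (Hpd : forall z, ex_derive psi z) by (intros z; exact (Hpsis 1%nat z)).
  assert (Hpd2 : forall z, ex_derive (Derive psi) z) by (intros z; exact (Hpsis 2%nat z)).
  assert (Hpd3 : forall z, ex_derive (Derive (Derive psi)) z) by (intros z; exact (Hpsis 3%nat z)).
  assert (Hpsic : contR psi) by (intros z; exact (ex_derive_continuous psi z (Hpd z))).
  assert (Hpsi'c : contR (Derive psi)) by (intros z; exact (ex_derive_continuous _ z (Hpd2 z))).
  assert (Hpsi''c : contR (Derive (Derive psi))) by (intros z; exact (ex_derive_continuous _ z (Hpd3 z))).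
  destruct (continuity_ab_maj (fun z => Rabs (Derive psi z)) (-A1) A1) as [z1 [Hz1 _]]. lra.
  { intros c _. apply contR_ptR. apply contR_abs; auto. }
  destruct (continuity_ab_maj (fun z => Rabs (Derive (Derive psi) z)) (-A1 - 1) (A1 + 1)) as [z2 [Hz2 _]]. lra.
  { intros c _. apply contR_ptR. apply contR_abs; auto. }
  set (Psi1 := Rabs (Derive psi z1)). set (Psi2 := Rabs (Derive (Derive psi) z2)).
  destruct (Hux (t + 1) ltac:(lra)) as [c Hc].
  destruct Hv0_L1 as [C HC].
  destruct (nat_above ((A1 + P) / (2 * PI))) as [n Hn].
  assert (HPI := PI_RGT_0).
  assert (HnP : A1 + P <= PI + 2 * PI * INR n).
  { apply Rmult_lt_compat_r with (r := 2 * PI) in Hn; [|lra].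
    unfold Rdiv in Hn. rewrite Rmult_assoc, Rinv_l in Hn by lra. lra. }
  set (L := (2 * INR n + 1) * C).
  assert (Hmass : forall eps, 0 < eps < 1 -> RInt (fun z => Rabs (X eps z t)) (-A1 - P) (A1 + P) <= L).
  { intros eps Heps.
    assert (Hucont : forall s, 0 <= s -> contR (fun x => u eps x s)).
    { intros s Hs x. destruct (Hu_cont eps Heps) as [Hc1 _]. destruct (Hc1 s Hs) as [Hc2 _]. apply Hc2. }
    pose proof (mass_bound eps M1 (u eps) (v0 eps) (X eps) (Xd eps) ltac:(lra) (HX eps Heps)
      (fun x s Hs => Hu_bd eps x s Heps Hs) (fun s Hs => Hu_per eps s Heps Hs) (proj2 (Hv0 eps Heps))
      Hucont t Ht) as Hm.
    pose proof (X_periodic eps M1 (u eps) (v0 eps) (X eps) (Xd eps) ltac:(lra) (HX eps Heps)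
      (fun x s Hs => Hu_bd eps x s Heps Hs) (fun s Hs => Hu_per eps s Heps Hs) (proj2 (Hv0 eps Heps)) t Ht) as Hper.
    assert (Hg : contR (fun z => Rabs (X eps z t))) by (apply contR_abs; apply HXcR; auto).
    assert (Hgp : periodic_2pi (fun z => Rabs (X eps z t))) by (intros z; simpl; rewrite Hper; auto).
    pose proof (periodic_RInt_n _ Hg Hgp n) as Hn2.
    assert (HnI : 0 <= INR n) by apply pos_INR.
    assert (RInt (fun z => Rabs (X eps z t)) (-A1 - P) (A1 + P) <= RInt (fun z => Rabs (X eps z t)) (- PI - 2 * PI * INR n) (PI + 2 * PI * INR n)).
    { rewrite <- (RInt_ChaslesR _ (- PI - 2 * PI * INR n) (-A1 - P) (PI + 2 * PI * INR n)) by auto.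
      rewrite <- (RInt_ChaslesR _ (-A1 - P) (A1 + P) (PI + 2 * PI * INR n)) by auto.
      assert (0 <= RInt (fun z => Rabs (X eps z t)) (- PI - 2 * PI * INR n) (-A1 - P)) by (apply RInt_ge0R; [lra|auto|intros; apply Rabs_pos]).
      assert (0 <= RInt (fun z => Rabs (X eps z t)) (A1 + P) (PI + 2 * PI * INR n)) by (apply RInt_ge0R; [lra|auto|intros; apply Rabs_pos]).
      lra. }
    specialize (HC eps Heps).
    unfold L. rewrite Hn2 in H.
    assert ((2 * INR n + 1) * RInt (fun z => Rabs (X eps z t)) (- PI) PI <= (2 * INR n + 1) * C).
    { apply Rmult_le_compat_l. lra. lra. }
    lra. }
  assert (Hdpz : forall x, A < Rabs x -> Derive psi x = 0).
  { intros x Hx. rewrite (Derive_ext_loc psi (fun _ => 0)). apply Derive_const.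
    assert (Hp : 0 < Rabs x - A) by lra.
    exists (mkposreal _ Hp). intros y Hy. change R in y. simpl in Hy.
    unfold ball in Hy; simpl in Hy; unfold AbsRing_ball, abs, minus, plus, opp in Hy; simpl in Hy.
    apply HA. change (Rabs (y - x) < Rabs x - A) in Hy. rewrite Rabs_minus_sym in Hy.
    pose proof (Rabs_triang_inv x (x - y)). replace (x - (x - y)) with y in H by ring. lra. }
  assert (Hbound : forall eps, 0 < eps < 1 ->
    Rabs (Rint_R (fun x => RInt (fun y => Xd eps (x - y) t * mollif phi alpha eps y) (-P) P * psi x
            - u eps x t * vconv phi alpha eps (X eps) x t * Derive psi x))
    <= 2 * P * Phi * L * (2 * M1 * Psi2 * eps + Psi1 * c * P * Rpower eps (alpha - beta))).
  { intros eps Heps.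
    specialize (Hr eps Heps).
    assert (Hcp : 0 <= c).
    { pose proof (Hc eps 0 t Heps ltac:(lra)). pose proof (Rabs_pos (Derive (fun y => u eps y t) 0)).
      assert (0 < Rpower eps (- beta)) by apply exp_pos. nra. }
    set (Lu := c * Rpower eps (- beta)).
    assert (HLu : 0 <= Lu) by (unfold Lu; apply Rmult_le_pos; auto; left; apply exp_pos).
    assert (Hfe : (fun x => RInt (fun y => Xd eps (x - y) t * mollif phi alpha eps y) (-P) P * psi x
            - u eps x t * vconv phi alpha eps (X eps) x t * Derive psi x) =
            (fun x => RInt (fun y => Xd eps (x - y) t * mollif phi alpha eps y) (-P) P * psi x
            - u eps x t * RInt (fun y => X eps (x - y) t * mollif phi alpha eps y) (-P) P * Derive psi x)).
    { apply functional_extensionality. intros x. rewrite Hvc; auto. }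
    rewrite Hfe.
    assert (Hucont : contR (fun x => u eps x t)).
    { intros x. destruct (Hu_cont eps Heps) as [Hc1 _]. destruct (Hc1 t Ht) as [Hc2 _]. apply Hc2. }
    rewrite (Rint_R_supp _ A1). 2: lra.
    2:{ apply exR.
        assert (K1 : contR (fun x => RInt (fun y => Xd eps (x - y) t * mollif phi alpha eps y) (-P) P)).
        { apply (conv_cont (fun z => Xd eps z t) (mollif phi alpha eps)). lra. apply HXdcR; [exact Heps|exact Ht]. apply Hmoc; exact Heps. }
        assert (K2 : contR (fun x => RInt (fun y => X eps (x - y) t * mollif phi alpha eps y) (-P) P)).
        { apply (conv_cont (fun z => X eps z t) (mollif phi alpha eps)). lra. apply HXcR; [exact Heps|exact Ht]. apply Hmoc; exact Heps. }
        apply (contR_minus (fun x => RInt (fun y => Xd eps (x - y) t * mollif phi alpha eps y) (-P) P * psi x)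
                           (fun x => u eps x t * RInt (fun y => X eps (x - y) t * mollif phi alpha eps y) (-P) P * Derive psi x)).
        apply (contR_mult _ psi K1 Hpsic).
        apply (contR_mult _ (Derive psi)); [|exact Hpsi'c].
        apply (contR_mult (fun x => u eps x t) _ Hucont K2). }
    2:{ intros x Hx. rewrite HA by lra. rewrite Hdpz by lra. ring. }
    eapply Rle_trans.
    apply (main_est eps M1 (Rpower eps alpha) P Phi Psi1 Psi2 A1 L Lu t (u eps) (v0 eps) (X eps) (Xd eps)
             (mollif phi alpha eps) psi).
    + exact Heps.
    + exact Hr.
    + exact HP.
    + exact HA1.
    + exact Ht.
    + exact HLu.
    + exact (HX eps Heps).
    + intros x s Hs. apply Hu_bd; auto.
    + exact Hucont.
    + intros x y. apply (lipschitz_mvt (fun y => u eps y t)).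
      intros z; apply Hu_dx; auto. intros z. apply Hc; auto. lra.
    + apply Hmoc; auto.
    + apply Hmos; auto.
    + apply Hmob; auto.
    + exact Hpsic.
    + exact Hpsi'c.
    + intros x Hx. apply HA. lra.
    + intros x Hx. apply Hz1. auto.
    + intros x Hx. apply taylor1; auto. intros z Hz. apply Hz2.
      revert Hz. unfold Rmin, Rmax. repeat destruct Rle_dec; intros; lra.
    + intros x Hx. replace (eps * eps) with (- eps * - eps) by ring. apply taylor1; auto. intros z Hz. apply Hz2.
      revert Hz. unfold Rmin, Rmax. repeat destruct Rle_dec; intros; lra.
    + apply Hmass; auto.
    - right. f_equal. f_equal. unfold Lu.
      replace (alpha - beta) with (- beta + alpha) by ring. rewrite Rpower_plus. ring. }
  assert (HPhi0 : 0 <= Phi) by (eapply Rle_trans; [apply Rabs_pos|apply (HPhi 0)]).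
  assert (Hhalf : 0 < / 2 < 1) by lra.
  assert (HL0 : 0 <= L).
  { eapply Rle_trans; [|apply (Hmass (/ 2) Hhalf)]. apply RInt_ge0R. lra.
    apply contR_abs; apply HXcR; auto. intros; apply Rabs_pos. }
  assert (Hc0 : 0 <= c).
  { pose proof (Hc (/ 2) 0 t Hhalf ltac:(lra)). pose proof (Rabs_pos (Derive (fun y => u (/ 2) y t) 0)).
    assert (0 < Rpower (/ 2) (- beta)) by apply exp_pos. nra. }
  assert (HPsi1 : 0 <= Psi1) by apply Rabs_pos.
  assert (HPsi2 : 0 <= Psi2) by apply Rabs_pos.
  set (K1 := 2 * P * Phi * L * (2 * M1 * Psi2)).
  set (K2 := 2 * P * Phi * L * (Psi1 * c * P)).
  assert (HK1 : 0 <= K1) by (unfold K1; apply Rmult_le_pos; [apply Rmult_le_pos; [apply Rmult_le_pos; lra| exact HL0]| repeat apply Rmult_le_pos; lra]).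
  assert (HK2 : 0 <= K2) by (unfold K2; apply Rmult_le_pos; [apply Rmult_le_pos; [apply Rmult_le_pos; lra| exact HL0]| repeat apply Rmult_le_pos; lra]).
  apply at_right_eps. intros e He.
  destruct (rpower_small (alpha - beta) ltac:(lra) (e / (2 * (K2 + 1)))) as [d1 [Hd1 Hd1']].
  { apply Rdiv_lt_0_compat; lra. }
  assert (He1 : 0 < e / (2 * (K1 + 1))) by (apply Rdiv_lt_0_compat; lra).
  exists (Rmin (Rmin 1 (e / (2 * (K1 + 1)))) d1). split.
  { apply Rmin_case; auto. apply Rmin_case; lra. }
  intros x Hx.
  assert (Hx1 : x < 1) by (pose proof (Rmin_l (Rmin 1 (e / (2 * (K1 + 1)))) d1); pose proof (Rmin_l 1 (e / (2 * (K1 + 1)))); lra).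
  assert (Hx2 : x < e / (2 * (K1 + 1))) by (pose proof (Rmin_l (Rmin 1 (e / (2 * (K1 + 1)))) d1); pose proof (Rmin_r 1 (e / (2 * (K1 + 1)))); lra).
  assert (Hx3 : x < d1) by (pose proof (Rmin_r (Rmin 1 (e / (2 * (K1 + 1)))) d1); lra).
  specialize (Hd1' x (conj (proj1 Hx) Hx3)).
  eapply Rle_lt_trans. apply (Hbound x). lra.
  replace (2 * P * Phi * L * (2 * M1 * Psi2 * x + Psi1 * c * P * Rpower x (alpha - beta)))
    with (K1 * x + K2 * Rpower x (alpha - beta)) by (unfold K1, K2; ring).
  assert (T1 : K1 * x < e / 2).
  { apply Rle_lt_trans with (K1 * (e / (2 * (K1 + 1)))). apply Rmult_le_compat_l; lra.
    replace (K1 * (e / (2 * (K1 + 1)))) with (e / 2 * (K1 / (K1 + 1))) by (field; lra).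
    assert (K1 / (K1 + 1) < 1).
    { apply Rmult_lt_reg_r with (K1 + 1). lra. unfold Rdiv. rewrite Rmult_assoc, Rinv_l by lra. lra. }
    nra. }
  assert (T2 : K2 * Rpower x (alpha - beta) < e / 2).
  { apply Rle_lt_trans with (K2 * (e / (2 * (K2 + 1)))). apply Rmult_le_compat_l; lra.
    replace (K2 * (e / (2 * (K2 + 1)))) with (e / 2 * (K2 / (K2 + 1))) by (field; lra).
    assert (K2 / (K2 + 1) < 1).
    { apply Rmult_lt_reg_r with (K2 + 1). lra. unfold Rdiv. rewrite Rmult_assoc, Rinv_l by lra. lra. }
    nra. }
  lra.
Qed.
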